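(* Let $(u,v)$ be the solution of (1.1) with initial data satisfying $(H_\infty)$, and assume condition (3.1) holds for some constants $c_1>\tilde c_1\ge 2$. Then: (i) $w^*$ is upper semicontinuous and is a viscosity subsolution of $\min\{\partial_t w+H_1(t,x,\partial_x w),\,w\}=0$ in $(0,\infty)\times\mathbb{R}$; (ii) $w_*$ is lower semicontinuous and is a viscosity supersolution of $\min\{\partial_t w+H_2(t,x,\partial_x w),\,w\}=0$ in $(0,\infty)\times\mathbb{R}$; moreover $w^*(0,x)=w_*(0,x)=0$ for all $x<0$ and $w_*(0,x)=+\infty$ for all $x>0$.
   Context: System (1.1): $\partial_t u-\partial_{xx}u=u(1-u-av)$, $\partial_t v-d\,\partial_{xx}v=rv(1-bu-v)$ on $(0,\infty)\times\mathbb{R}$ with data $u_0,v_0$, where $d,r>0$, $a,b\in(0,1)$. Hypothesis $(H_\infty)$: $u_0,v_0\in C(\mathbb{R};[0,1])$; there exist $\theta_0>0$, $x_0>0$ with $\theta_0\le u_0\le1$ on $(-\infty,0]$ and $u_0=0$ on $[x_0,\infty)$; $v_0\not\equiv0$ has compact support. Rescalings: $u^\epsilon(t,x)=u(t/\epsilon,x/\epsilon)$, $v^\epsilon(t,x)=v(t/\epsilon,x/\epsilon)$, $w^\epsilon=-\epsilon\log u^\epsilon$. Condition (3.1): for all $(t,x)\in(0,\infty)\times\mathbb{R}$, $\chi_{\{\tilde c_1t<x<c_1t\}}\le\liminf_{\epsilon\to0,(t',x')\to(t,x)}v^\epsilon(t',x')\le\limsup_{\epsilon\to0,(t',x')\to(t,x)}v^\epsilon(t',x')\le\chi_{\{x\le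 c_1t\}}$. Half-relaxed limits: $w^*(t,x)=\limsup_{\epsilon\to0,(t',x')\to(t,x)}w^\epsilon(t',x')$, $w_*(t,x)=\liminf_{\epsilon\to0,(t',x')\to(t,x)}w^\epsilon(t',x')$ (with $(t',x')\in[0,\infty)\times\mathbb{R}$). Hamiltonians: $H_1(t,x,p)=|p|^2+1-a\chi_{\{x\le c_1t\}}$, $H_2(t,x,p)=|p|^2+1-a\chi_{\{\tilde c_1t<x<c_1t\}}$; $\chi_S$ denotes the indicator function of $S$. *)

(* Defs.v *)
From Stdlib Require Import Reals Lra.
Open Scope R_scope.

Inductive Rbar : Type := Finite (r : R) | p_infty | m_infty.

Definition Rbar_lt (x y : Rbar) : Prop :=
  match x, y with
  | Finite a, Finite b => a < b
  | m_infty, p_infty => True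
  | m_infty, Finite _ => True
  | Finite _, p_infty => True
  | _, _ => False
  end.

Definition Rbar_le (x y : Rbar) : Prop :=
  match x, y with
  | Finite a, Finite b => a <= b
  | m_infty, _ => True
  | _, p_infty => True
  | _, _ => False
  end.

Definition Rbar_addr (x : Rbar) (c : R) : Rbar :=
  match x with
  | Finite a => Finite (a + c)
  | p_infty => p_infty
  | m_infty => m_infty
  end.

Definition cont2_on (P : R -> R -> Prop) (f : R -> R -> R) : Prop :=
  forall t x, P t x -> forall eps, 0 < eps -> exists delta, 0 < delta /\
    forall t' x', P t' x' -> Rabs (t' - t) < delta -> Rabs (x' - x) < delta ->
      Rabs (f t' x' - f t x) < eps.

Definition closed_half (t x : R) : Prop := 0 <= t.
Definition open_half (t x : R) : Prop := 0 < t.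

Definition classical_C12 (z : R -> R -> R) (zt zx zxx : R -> R -> R) : Prop :=
  cont2_on closed_half z /\
  cont2_on open_half zt /\ cont2_on open_half zx /\ cont2_on open_half zxx /\
  (forall t x, 0 < t ->
     derivable_pt_lim (fun s => z s x) t (zt t x) /\
     derivable_pt_lim (fun y => z t y) x (zx t x) /\
     derivable_pt_lim (fun y => zx t y) x (zxx t x)).

Definition is_solution_11 (d r a b : R) (u0 v0 : R -> R) (u v : R -> R -> R) : Prop :=
  (exists B, forall t x, 0 <= t -> Rabs (u t x) <= B /\ Rabs (v t x) <= B) /\
  (forall x, u 0 x = u0 x /\ v 0 x = v0 x) /\
  exists ut ux uxx vt vx vxx : R -> R -> R,
    classical_C12 u ut ux uxx /\ classical_C12 v vt vx vxx /\
    forall t x, 0 < t ->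
      ut t x - uxx t x = u t x * (1 - u t x - a * v t x) /\
      vt t x - d * vxx t x = r * v t x * (1 - b * u t x - v t x).

Definition H_inf (u0 v0 : R -> R) : Prop :=
  continuity u0 /\ continuity v0 /\
  (forall x, 0 <= u0 x <= 1 /\ 0 <= v0 x <= 1) /\
  (exists theta0 x0, 0 < theta0 /\ 0 < x0 /\
     (forall x, x <= 0 -> theta0 <= u0 x <= 1) /\
     (forall x, x0 <= x -> u0 x = 0)) /\
  (exists x, v0 x <> 0) /\
  (exists K, forall x, K < Rabs x -> v0 x = 0).

Definition resc (z : R -> R -> R) (e t x : R) : R := z (t / e) (x / e).

(** w^eps = - eps log u^eps  (= +oo where u^eps <= 0). *)
Definition weps (u : R -> R -> R) (e t x : R) : Rbar :=
  if Rlt_dec 0 (resc u e t x) then Finite (- e * ln (resc u e t x)) else p_infty.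

(** Half-relaxed limits: L = limsup_{eps->0+, (t',x')->(t,x), t'>=0} f eps t' x'. *)
Definition hr_limsup (f : R -> R -> R -> Rbar) (t x : R) (L : Rbar) : Prop :=
  (forall M : R, Rbar_lt L (Finite M) -> exists delta, 0 < delta /\
     forall e t' x', 0 < e < delta -> 0 <= t' -> Rabs (t' - t) < delta ->
       Rabs (x' - x) < delta -> Rbar_lt (f e t' x') (Finite M)) /\
  (forall M : R, Rbar_lt (Finite M) L -> forall delta, 0 < delta ->
     exists e t' x', 0 < e < delta /\ 0 <= t' /\ Rabs (t' - t) < delta /\
       Rabs (x' - x) < delta /\ Rbar_lt (Finite M) (f e t' x')).

Definition hr_liminf (f : R -> R -> R -> Rbar) (t x : R) (L : Rbar) : Prop :=
  (forall M : R, Rbar_lt (Finite M) L -> exists delta, 0 < delta /\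
     forall e t' x', 0 < e < delta -> 0 <= t' -> Rabs (t' - t) < delta ->
       Rabs (x' - x) < delta -> Rbar_lt (Finite M) (f e t' x')) /\
  (forall M : R, Rbar_lt L (Finite M) -> forall delta, 0 < delta ->
     exists e t' x', 0 < e < delta /\ 0 <= t' /\ Rabs (t' - t) < delta /\
       Rabs (x' - x) < delta /\ Rbar_lt (f e t' x') (Finite M)).

Definition chi_le (c1 t x : R) : R := if Rle_dec x (c1 * t) then 1 else 0.
Definition chi_between (ct1 c1 t x : R) : R :=
  if Rlt_dec (ct1 * t) x then (if Rlt_dec x (c1 * t) then 1 else 0) else 0.

Definition cond31 (v : R -> R -> R) (c1 ct1 : R) : Prop :=
  forall t x, 0 < t -> forall l L : Rbar,
    hr_liminf (fun e t' x' => Finite (resc v e t' x')) t x l ->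
    hr_limsup (fun e t' x' => Finite (resc v e t' x')) t x L ->
    Rbar_le (Finite (chi_between ct1 c1 t x)) l /\ Rbar_le l L /\
    Rbar_le L (Finite (chi_le c1 t x)).

Definition H1 (a c1 t x p : R) : R := p ^ 2 + 1 - a * chi_le c1 t x.
Definition H2 (a c1 ct1 t x p : R) : R := p ^ 2 + 1 - a * chi_between ct1 c1 t x.

Definition usc_on_closed_half (w : R -> R -> Rbar) : Prop :=
  forall t0 x0, 0 <= t0 -> forall M : R, Rbar_lt (w t0 x0) (Finite M) ->
    exists delta, 0 < delta /\ forall t x, 0 <= t -> Rabs (t - t0) < delta ->
      Rabs (x - x0) < delta -> Rbar_lt (w t x) (Finite M).

Definition lsc_on_closed_half (w : R -> R -> Rbar) : Prop :=
  forall t0 x0, 0 <= t0 -> forall M : R, Rbar_lt (Finite M) (w t0 x0) ->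
    exists delta, 0 < delta /\ forall t x, 0 <= t -> Rabs (t - t0) < delta ->
      Rabs (x - x0) < delta -> Rbar_lt (Finite M) (w t x).

Definition C1_test (phi phit phix : R -> R -> R) : Prop :=
  cont2_on open_half phi /\ cont2_on open_half phit /\ cont2_on open_half phix /\
  forall t x, 0 < t ->
    derivable_pt_lim (fun s => phi s x) t (phit t x) /\
    derivable_pt_lim (fun y => phi t y) x (phix t x).

(** Viscosity subsolution of  min{ w_t + H(t,x,w_x), w } = 0  in (0,oo) x R. *)
Definition visc_subsol (H : R -> R -> R -> R) (w : R -> R -> Rbar) : Prop :=
  forall phi phit phix t0 x0, C1_test phi phit phix -> 0 < t0 ->
    (exists rho, 0 < rho /\ forall t x, 0 < t -> Rabs (t - t0) < rho ->
        Rabs (x - x0) < rho ->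
        Rbar_le (w t x) (Rbar_addr (w t0 x0) (phi t x - phi t0 x0))) ->
    phit t0 x0 + H t0 x0 (phix t0 x0) <= 0 \/ Rbar_le (w t0 x0) (Finite 0).

(** Viscosity supersolution of  min{ w_t + H(t,x,w_x), w } = 0  in (0,oo) x R. *)
Definition visc_supersol (H : R -> R -> R -> R) (w : R -> R -> Rbar) : Prop :=
  forall phi phit phix t0 x0, C1_test phi phit phix -> 0 < t0 ->
    (exists rho, 0 < rho /\ forall t x, 0 < t -> Rabs (t - t0) < rho ->
        Rabs (x - x0) < rho ->
        Rbar_le (Rbar_addr (w t0 x0) (phi t x - phi t0 x0)) (w t x)) ->
    0 <= phit t0 x0 + H t0 x0 (phix t0 x0) /\ Rbar_le (Finite 0) (w t0 x0).

(* Main.v *)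
Require Import Defs.
From Stdlib Require Import Reals Lra Lia Psatz Classical ClassicalEpsilon.
From Coquelicot Require Compactness.
Open Scope R_scope.

Lemma dl_scal a f x l : derivable_pt_lim f x l -> derivable_pt_lim (fun y => a * f y) x (a * l).
Proof. apply derivable_pt_lim_scal. Qed.
Lemma dl_plus f g x l1 l2 : derivable_pt_lim f x l1 -> derivable_pt_lim g x l2 ->
  derivable_pt_lim (fun y => f y + g y) x (l1 + l2).
Proof. apply derivable_pt_lim_plus. Qed.
Lemma dl_minus f g x l1 l2 : derivable_pt_lim f x l1 -> derivable_pt_lim g x l2 ->
  derivable_pt_lim (fun y => f y - g y) x (l1 - l2).
Proof. apply derivable_pt_lim_minus. Qed.
Lemma dl_mult f g x l1 l2 : derivable_pt_lim f x l1 -> derivable_pt_lim g x l2 ->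
  derivable_pt_lim (fun y => f y * g y) x (l1 * g x + f x * l2).
Proof. apply derivable_pt_lim_mult. Qed.
Lemma dl_comp f g x l1 l2 : derivable_pt_lim f x l1 -> derivable_pt_lim g (f x) l2 ->
  derivable_pt_lim (fun y => g (f y)) x (l2 * l1).
Proof. apply derivable_pt_lim_comp. Qed.
Lemma dl_id x : derivable_pt_lim (fun y => y) x 1.
Proof. apply derivable_pt_lim_id. Qed.
Lemma dl_const c x : derivable_pt_lim (fun _ => c) x 0.
Proof. apply derivable_pt_lim_const. Qed.
Lemma dl_ext f g x l : (forall y, f y = g y) -> derivable_pt_lim f x l -> derivable_pt_lim g x l.
Proof. intros H Hd eps He. destruct (Hd eps He) as [d Hd2]. exists d. intros h Hh Hh2. rewrite <- !H. auto. Qed.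
Lemma dl_eq f x l l' : l = l' -> derivable_pt_lim f x l -> derivable_pt_lim f x l'.
Proof. intros ->; auto. Qed.
Lemma dl_loc f g x l r : 0 < r -> (forall y, Rabs (y - x) < r -> f y = g y) ->
  derivable_pt_lim f x l -> derivable_pt_lim g x l.
Proof.
  intros Hr H Hd eps He. destruct (Hd eps He) as [d Hd2].
  assert (Hm : 0 < Rmin d r) by (apply Rmin_glb_lt; [apply cond_pos|auto]).
  exists (mkposreal _ Hm). intros h Hh Hh2. simpl in Hh2.
  rewrite <- !H. apply Hd2; auto. eapply Rlt_le_trans; [exact Hh2|apply Rmin_l].
  rewrite Rminus_diag, Rabs_R0; auto.
  replace (x + h - x) with h by ring. eapply Rlt_le_trans; [exact Hh2|apply Rmin_r].
Qed.
Lemma dl_exp x : derivable_pt_lim exp x (exp x).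
Proof. apply derivable_pt_lim_exp. Qed.

Lemma dl_cont f l c : derivable_pt_lim f c l -> continuity_pt f c.
Proof. intro H. apply derivable_continuous_pt. exists l. exact H. Qed.

Lemma expK_dl K t : derivable_pt_lim (fun s => exp (K * s)) t (K * exp (K * t)).
Proof.
  apply (dl_eq _ _ (exp (K * t) * (K * 1))). ring.
  apply (dl_comp (fun s => K * s) exp). apply dl_scal. apply dl_id. apply dl_exp.
Qed.
Lemma dl_opp f x l : derivable_pt_lim f x l -> derivable_pt_lim (fun y => - f y) x (- l).
Proof. intro H. apply (dl_eq _ _ (-1 * l)). ring. apply (dl_ext (fun y => -1 * f y)). intro; ring. apply dl_scal; auto. Qed.
Lemma dl_expaff A k s : derivable_pt_lim (fun y => exp (A + k * y)) s (k * exp (A + k * s)).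
Proof.
  apply (dl_eq _ _ (exp (A + k * s) * (0 + k * 1))). ring.
  apply (dl_comp (fun y => A + k * y) exp). apply dl_plus. apply dl_const. apply dl_scal. apply dl_id. apply dl_exp.
Qed.
Lemma Rdiv_le_0_compat' a b : 0 <= a -> 0 < b -> 0 <= a / b.
Proof. intros. unfold Rdiv. apply Rmult_le_pos; auto. left; apply Rinv_0_lt_compat; auto. Qed.

Lemma cousin2 (a1 b1 a2 b2 : R) (delta : R -> R -> R) :
  (forall t s, 0 < delta t s) ->
  exists d, 0 < d /\ forall x y, a1 <= x <= b1 -> a2 <= y <= b2 ->
    exists t s, a1 <= t <= b1 /\ a2 <= s <= b2 /\ Rabs (x - t) < delta t s /\
      Rabs (y - s) < delta t s /\ d <= delta t s.
Proof.
  intros Hd.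
  pose (dl := fun z : Compactness.Tn 2 R =>
    match z with (t, (s, _)) => mkposreal (delta t s) (Hd t s) end).
  destruct (Compactness.compactness_value 2 (a1, (a2, tt)) (b1, (b2, tt)) dl) as [d Hdd].
  exists (pos d). split. apply cond_pos.
  intros x y Hx Hy.
  specialize (Hdd (x, (y, tt))). simpl in Hdd.
  apply NNPP. intro Hn. apply Hdd. tauto. intros [[t [s []]] [Hb [Hc Hle]]].
  apply Hn. exists t, s. simpl in *. tauto.
Qed.

Lemma choice2 {A B C : Type} (P : A -> B -> C -> Prop) :
  (forall a b, exists c, P a b c) -> exists f, forall a b, P a b (f a b).
Proof.
  intro H.
  destruct (choice (fun (ab : A * B) c => P (fst ab) (snd ab) c)) as [g Hg].
  { intros [a b]. apply H. }
  exists (fun a b => g (a, b)). intros a b. apply (Hg (a, b)).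
Qed.

Definition box (a1 b1 a2 b2 t x : R) := a1 <= t <= b1 /\ a2 <= x <= b2.

Definition cont_box (a1 b1 a2 b2 : R) (f : R -> R -> R) : Prop :=
  forall t x, box a1 b1 a2 b2 t x -> forall eps, 0 < eps -> exists delta, 0 < delta /\
    forall t' x', box a1 b1 a2 b2 t' x' -> Rabs (t' - t) < delta -> Rabs (x' - x) < delta ->
      Rabs (f t' x' - f t x) < eps.

Lemma unif_cont_box a1 b1 a2 b2 f : cont_box a1 b1 a2 b2 f ->
  forall eps, 0 < eps -> exists d, 0 < d /\ forall t x t' x',
    box a1 b1 a2 b2 t x -> box a1 b1 a2 b2 t' x' -> Rabs (t' - t) < d -> Rabs (x' - x) < d ->
      Rabs (f t' x' - f t x) < eps.
Proof.
  intros Hc eps Heps.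
  assert (H : forall t x, exists dl, 0 < dl /\ (box a1 b1 a2 b2 t x ->
    forall t' x', box a1 b1 a2 b2 t' x' -> Rabs (t' - t) < dl -> Rabs (x' - x) < dl ->
      Rabs (f t' x' - f t x) < eps/2)).
  { intros t x. destruct (classic (box a1 b1 a2 b2 t x)) as [Hb|Hb].
    - destruct (Hc t x Hb (eps/2)) as [dl [Hdl Hdl2]]. lra. exists dl; split; auto.
    - exists 1. split. lra. tauto. }
  destruct (choice2 _ H) as [G HG].
  destruct (cousin2 a1 b1 a2 b2 (fun t s => G t s / 2)) as [d [Hd Hd2]].
  { intros t s. destruct (HG t s). lra. }
  exists d. split; auto.
  intros t x t' x' Hb Hb' Ht Hx.
  destruct Hb as [Hb1 Hb2].
  destruct (Hd2 t x Hb1 Hb2) as [c [s [Hc1 [Hs1 [Hct [Hcs Hle]]]]]].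
  destruct (HG c s) as [Hpos Hcl].
  assert (Hbc : box a1 b1 a2 b2 c s) by (split; auto).
  assert (A1 := Hcl Hbc t x (conj Hb1 Hb2) ltac:(lra) ltac:(lra)).
  assert (A2 := Hcl Hbc t' x' Hb').
  assert (Rabs (t' - c) < G c s).
  { replace (t' - c) with ((t' - t) + (t - c)) by ring.
    eapply Rle_lt_trans. apply Rabs_triang. lra. }
  assert (Rabs (x' - s) < G c s).
  { replace (x' - s) with ((x' - x) + (x - s)) by ring.
    eapply Rle_lt_trans. apply Rabs_triang. lra. }
  specialize (A2 H0 H1).
  replace (f t' x' - f t x) with ((f t' x' - f c s) - (f t x - f c s)) by ring.
  eapply Rle_lt_trans. apply Rabs_triang. rewrite Rabs_Ropp. lra.
Qed.

Lemma cont_pt_intro (g : R -> R) c :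
  (forall eps, 0 < eps -> exists d, 0 < d /\ forall y, Rabs (y - c) < d -> Rabs (g y - g c) < eps) ->
  continuity_pt g c.
Proof.
  intros H eps Heps. destruct (H eps Heps) as [d [Hd Hd2]].
  exists d. split; auto. intros y [_ Hy]. apply Hd2. exact Hy.
Qed.

Definition clamp (a b x : R) := Rmax a (Rmin b x).

Lemma clamp_in a b x : a <= b -> a <= clamp a b x <= b.
Proof. intros. unfold clamp, Rmax, Rmin. repeat destruct Rle_dec; lra. Qed.

Lemma clamp_id a b x : a <= x <= b -> clamp a b x = x.
Proof. intros. unfold clamp, Rmax, Rmin. repeat destruct Rle_dec; lra. Qed.

Lemma clamp_lip a b x y : a <= b -> Rabs (clamp a b x - clamp a b y) <= Rabs (x - y).
Proof.
  intros. unfold clamp, Rmax, Rmin. repeat destruct Rle_dec;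
  unfold Rabs; repeat destruct Rcase_abs; lra.
Qed.

Lemma evt_box a1 b1 a2 b2 f : a1 <= b1 -> a2 <= b2 -> cont_box a1 b1 a2 b2 f ->
  exists t x, box a1 b1 a2 b2 t x /\ forall t' x', box a1 b1 a2 b2 t' x' -> f t' x' <= f t x.
Proof.
  intros H1 H2 Hc.
  assert (Hu := unif_cont_box _ _ _ _ _ Hc).
  assert (Hx : forall t, exists xm, (a1 <= t <= b1 -> a2 <= xm <= b2 /\
     forall x, a2 <= x <= b2 -> f t x <= f t xm)).
  { intro t. destruct (classic (a1 <= t <= b1)) as [Ht|Ht]; [|exists a2; tauto].
    destruct (continuity_ab_maj (fun x => f t (clamp a2 b2 x)) a2 b2 H2) as [xm [Hm1 Hm2]].
    { intros c Hcc. apply cont_pt_intro. intros eps Heps.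
      destruct (Hu eps Heps) as [d [Hd Hd2]]. exists d. split; auto.
      intros y Hy. apply Hd2. split; auto. apply clamp_in; auto. split; auto. apply clamp_in; auto.
      rewrite Rminus_diag, Rabs_R0; auto.
      eapply Rle_lt_trans. apply clamp_lip; auto. auto. }
    exists xm. intros _. split; auto. intros x Hxx.
    specialize (Hm1 x Hxx). rewrite (clamp_id _ _ x Hxx), (clamp_id _ _ xm Hm2) in Hm1. exact Hm1. }
  destruct (choice _ Hx) as [xm Hxm].
  pose (m := fun t => f (clamp a1 b1 t) (xm (clamp a1 b1 t))).
  destruct (continuity_ab_maj m a1 b1 H1) as [tm [Htm1 Htm2]].
  { intros c Hcc. apply cont_pt_intro. intros eps Heps.
    destruct (Hu (eps/2)) as [d [Hd Hd2]]. lra. exists d. split; auto.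
    intros y Hy. unfold m.
    set (p := clamp a1 b1 y). set (q := clamp a1 b1 c).
    assert (Hp : a1 <= p <= b1) by (apply clamp_in; auto).
    assert (Hq : a1 <= q <= b1) by (apply clamp_in; auto).
    assert (Hpq : Rabs (p - q) < d) by (eapply Rle_lt_trans; [apply clamp_lip; auto| auto]).
    destruct (Hxm p Hp) as [Hxp Hfp]. destruct (Hxm q Hq) as [Hxq Hfq].
    assert (A := Hfp (xm q) Hxq). assert (B := Hfq (xm p) Hxp).
    assert (C := Hd2 q (xm q) p (xm q) (conj Hq Hxq) (conj Hp Hxq) Hpq ltac:(rewrite Rminus_diag, Rabs_R0; auto)).
    assert (D := Hd2 p (xm p) q (xm p) (conj Hp Hxp) (conj Hq Hxp) ltac:(rewrite <- Rabs_Ropp; replace (-(q-p)) with (p-q) by ring; auto) ltac:(rewrite Rminus_diag, Rabs_R0; auto)).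
    revert A B C D. unfold Rabs. repeat destruct Rcase_abs; lra. }
  exists tm, (xm tm). destruct (Hxm tm Htm2) as [Hx1 Hx2]. split. split; auto.
  intros t' x' [Ht' Hx'].
  specialize (Htm1 t' Ht'). unfold m in Htm1. rewrite !clamp_id in Htm1 by auto.
  eapply Rle_trans; [|exact Htm1]. apply (proj2 (Hxm t' Ht')). exact Hx'.
Qed.

Lemma dquot_pos f c h : 0 < h -> f (c + h) <= f c -> (f (c + h) - f c) / h <= 0.
Proof. intros Hh Hf. unfold Rdiv. assert (0 < /h) by (apply Rinv_0_lt_compat; auto). nra. Qed.

Lemma dquot_neg f c h : h < 0 -> f (c + h) <= f c -> 0 <= (f (c + h) - f c) / h.
Proof. intros Hh Hf. unfold Rdiv. assert (/h < 0) by (apply Rinv_lt_0_compat; auto). nra. Qed.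

Lemma left_max_deriv f c l r : 0 < r -> (forall y, c - r < y <= c -> f y <= f c) ->
  derivable_pt_lim f c l -> 0 <= l.
Proof.
  intros Hr Hm Hd. destruct (Rle_or_lt 0 l) as [|Hl]; auto. exfalso.
  destruct (Hd (-l)) as [d Hdd]. lra.
  set (h := - Rmin (d/2) (r/2)).
  assert (Hh : h < 0) by (unfold h; apply Ropp_lt_gt_0_contravar; apply Rmin_glb_lt; destruct d; simpl; lra).
  assert (Hh2 : Rabs h < d). { unfold h. rewrite Rabs_Ropp, Rabs_pos_eq. eapply Rle_lt_trans. apply Rmin_l. destruct d; simpl; lra. apply Rmin_glb; destruct d; simpl; lra. }
  specialize (Hdd h ltac:(lra) Hh2).
  assert (Hq := dquot_neg f c h Hh (Hm (c+h) ltac:(split; [unfold h; assert (Rmin (d/2) (r/2) <= r/2) by apply Rmin_r; lra| lra]))).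
  revert Hdd. unfold Rabs. destruct Rcase_abs; lra.
Qed.

Lemma right_max_deriv f c l r : 0 < r -> (forall y, c <= y < c + r -> f y <= f c) ->
  derivable_pt_lim f c l -> l <= 0.
Proof.
  intros Hr Hm Hd. destruct (Rle_or_lt l 0) as [|Hl]; auto. exfalso.
  destruct (Hd l) as [d Hdd]. lra.
  set (h := Rmin (d/2) (r/2)).
  assert (Hh : 0 < h) by (unfold h; apply Rmin_glb_lt; destruct d; simpl; lra).
  assert (Hh2 : Rabs h < d). { unfold h. rewrite Rabs_pos_eq. eapply Rle_lt_trans. apply Rmin_l. destruct d; simpl; lra. exact (Rlt_le _ _ Hh). }
  specialize (Hdd h ltac:(lra) Hh2).
  assert (Hq := dquot_pos f c h Hh (Hm (c+h) ltac:(split; [lra| unfold h; assert (Rmin (d/2) (r/2) <= r/2) by apply Rmin_r; lra]))).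
  revert Hdd. unfold Rabs. destruct Rcase_abs; lra.
Qed.

Lemma max_deriv0 f c l r : 0 < r -> (forall y, Rabs (y - c) < r -> f y <= f c) ->
  derivable_pt_lim f c l -> l = 0.
Proof.
  intros Hr Hm Hd. apply Rle_antisym.
  - eapply right_max_deriv; eauto. intros y Hy. apply Hm. rewrite Rabs_pos_eq; lra.
  - eapply left_max_deriv; eauto. intros y Hy. apply Hm. rewrite Rabs_left1; lra.
Qed.

Lemma max_deriv2 f f' c l2 r : 0 < r -> (forall y, Rabs (y - c) < r -> f y <= f c) ->
  (forall y, Rabs (y - c) < r -> derivable_pt_lim f y (f' y)) ->
  derivable_pt_lim f' c l2 -> l2 <= 0.
Proof.
  intros Hr Hm Hd Hd2. destruct (Rle_or_lt l2 0) as [|Hl]; auto. exfalso.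
  assert (H0 : f' c = 0). { apply (max_deriv0 f c (f' c) r Hr Hm). apply Hd. rewrite Rminus_diag, Rabs_R0; auto. }
  destruct (Hd2 l2) as [d Hdd]. lra.
  set (h := Rmin (d/2) (r/2)).
  assert (Hh : 0 < h) by (unfold h; apply Rmin_glb_lt; destruct d; simpl; lra).
  assert (Hhr : h <= r/2) by apply Rmin_r. assert (Hhd : h <= d/2) by apply Rmin_l.
  destruct (MVT_cor2 f f' c (c + h)) as [xi [Heq Hxi]]. lra.
  { intros z Hz. apply Hd. rewrite Rabs_pos_eq; lra. }
  assert (Hpos : 0 < f' xi).
  { specialize (Hdd (xi - c) ltac:(lra) ltac:(rewrite Rabs_pos_eq; destruct d; simpl in *; lra)).
    replace (c + (xi - c)) with xi in Hdd by ring. rewrite H0 in Hdd.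
    assert (Hq : 0 < (f' xi - 0) / (xi - c)). { revert Hdd. unfold Rabs. destruct Rcase_abs; lra. }
    unfold Rdiv in Hq. assert (0 < / (xi - c)) by (apply Rinv_0_lt_compat; lra).
    destruct (Rle_or_lt (f' xi) 0); auto. nra. }
  assert (f (c + h) <= f c) by (apply Hm; rewrite Rabs_pos_eq; lra).
  nra.
Qed.

Lemma cont_box_add a1 b1 a2 b2 f g : cont_box a1 b1 a2 b2 f -> cont_box a1 b1 a2 b2 g ->
  cont_box a1 b1 a2 b2 (fun t x => f t x + g t x).
Proof.
  intros Hf Hg t x Hb eps He.
  destruct (Hf t x Hb (eps/2)) as [d1 [Hd1 H1]]. lra.
  destruct (Hg t x Hb (eps/2)) as [d2 [Hd2 H2]]. lra.
  exists (Rmin d1 d2). split. apply Rmin_glb_lt; auto.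
  intros t' x' Hb' Ht Hx.
  assert (Rabs (t'-t) < d1 /\ Rabs (t'-t) < d2) by (split; eapply Rlt_le_trans; eauto; [apply Rmin_l|apply Rmin_r]).
  assert (Rabs (x'-x) < d1 /\ Rabs (x'-x) < d2) by (split; eapply Rlt_le_trans; eauto; [apply Rmin_l|apply Rmin_r]).
  specialize (H1 t' x' Hb' ltac:(tauto) ltac:(tauto)).
  specialize (H2 t' x' Hb' ltac:(tauto) ltac:(tauto)).
  replace (f t' x' + g t' x' - (f t x + g t x)) with ((f t' x' - f t x) + (g t' x' - g t x)) by ring.
  eapply Rle_lt_trans. apply Rabs_triang. lra.
Qed.

Lemma cont_box_mul a1 b1 a2 b2 f g : cont_box a1 b1 a2 b2 f -> cont_box a1 b1 a2 b2 g ->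
  cont_box a1 b1 a2 b2 (fun t x => f t x * g t x).
Proof.
  intros Hf Hg t x Hb eps He.
  set (A := Rabs (f t x) + 1). set (Bg := Rabs (g t x) + 1).
  assert (HA : 0 < A) by (unfold A; pose proof (Rabs_pos (f t x)); lra).
  assert (HB : 0 < Bg) by (unfold Bg; pose proof (Rabs_pos (g t x)); lra).
  destruct (Hf t x Hb (eps/(2*Bg))) as [d1 [Hd1 H1]]. apply Rdiv_lt_0_compat; lra.
  destruct (Hg t x Hb (Rmin 1 (eps/(2*A)))) as [d2 [Hd2 H2]]. apply Rmin_glb_lt. lra. apply Rdiv_lt_0_compat; lra.
  exists (Rmin d1 d2). split. apply Rmin_glb_lt; auto.
  intros t' x' Hb' Ht Hx.
  assert (Rabs (t'-t) < d1 /\ Rabs (t'-t) < d2) by (split; eapply Rlt_le_trans; eauto; [apply Rmin_l|apply Rmin_r]).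
  assert (Rabs (x'-x) < d1 /\ Rabs (x'-x) < d2) by (split; eapply Rlt_le_trans; eauto; [apply Rmin_l|apply Rmin_r]).
  specialize (H1 t' x' Hb' ltac:(tauto) ltac:(tauto)).
  specialize (H2 t' x' Hb' ltac:(tauto) ltac:(tauto)).
  assert (H2a : Rabs (g t' x' - g t x) < 1) by (eapply Rlt_le_trans; [exact H2| apply Rmin_l]).
  assert (H2b : Rabs (g t' x' - g t x) < eps/(2*A)) by (eapply Rlt_le_trans; [exact H2| apply Rmin_r]).
  replace (f t' x' * g t' x' - f t x * g t x) with ((f t' x' - f t x) * g t' x' + f t x * (g t' x' - g t x)) by ring.
  eapply Rle_lt_trans. apply Rabs_triang. rewrite !Rabs_mult.
  assert (Hg' : Rabs (g t' x') <= Bg).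
  { unfold Bg. replace (g t' x') with (g t x + (g t' x' - g t x)) by ring.
    eapply Rle_trans. apply Rabs_triang. lra. }
  assert (E1 : Rabs (f t' x' - f t x) * Rabs (g t' x') <= eps/(2*Bg) * Bg).
  { apply Rmult_le_compat; try apply Rabs_pos; lra. }
  assert (E2 : Rabs (f t x) * Rabs (g t' x' - g t x) <= A * (eps/(2*A))).
  { apply Rmult_le_compat; [apply Rabs_pos|apply Rabs_pos| unfold A; lra | lra]. }
  assert (E3 : Rabs (f t x) * Rabs (g t' x' - g t x) < A * (eps/(2*A))).
  { apply Rle_lt_trans with (Rabs (f t x) * (eps/(2*A))).
    apply Rmult_le_compat_l; [apply Rabs_pos| lra].
    apply Rmult_lt_compat_r. apply Rdiv_lt_0_compat; lra. unfold A; lra. }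
  replace (eps/(2*Bg) * Bg) with (eps/2) in * by (field; lra).
  replace (A * (eps/(2*A))) with (eps/2) in * by (field; lra).
  lra.
Qed.

Lemma cont_box_const a1 b1 a2 b2 c : cont_box a1 b1 a2 b2 (fun _ _ => c).
Proof. intros t x _ eps He. exists 1. split. lra. intros. rewrite Rminus_diag, Rabs_R0. auto. Qed.

Lemma cont_pt_elim (h : R -> R) c : continuity_pt h c ->
  forall eps, 0 < eps -> exists d, 0 < d /\ forall y, Rabs (y - c) < d -> Rabs (h y - h c) < eps.
Proof.
  intros Hh eps He. destruct (Hh eps He) as [d [Hd Hd2]]. exists d. split; auto.
  intros y Hy. destruct (Req_dec y c) as [->|Hne]. rewrite Rminus_diag, Rabs_R0; auto.
  apply (Hd2 y). split. split. constructor. auto. exact Hy.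
Qed.

Lemma cont_box_t a1 b1 a2 b2 (h : R -> R) : (forall t, continuity_pt h t) ->
  cont_box a1 b1 a2 b2 (fun t _ => h t).
Proof.
  intros Hh t x _ eps He. destruct (cont_pt_elim h t (Hh t) eps He) as [d [Hd Hd2]].
  exists d. split; [auto|]. intros t' x' _ Ht _. apply Hd2. exact Ht.
Qed.

Lemma cont_box_x a1 b1 a2 b2 (h : R -> R) : (forall t, continuity_pt h t) ->
  cont_box a1 b1 a2 b2 (fun _ x => h x).
Proof.
  intros Hh t x _ eps He. destruct (cont_pt_elim h x (Hh x) eps He) as [d [Hd Hd2]].
  exists d. split; [auto|]. intros t' x' _ _ Hx. apply Hd2. exact Hx.
Qed.

Lemma cont_box_of_cont2 (P : R -> R -> Prop) a1 b1 a2 b2 f :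
  (forall t x, box a1 b1 a2 b2 t x -> P t x) -> cont2_on P f -> cont_box a1 b1 a2 b2 f.
Proof.
  intros HP Hf t x Hb eps He. destruct (Hf t x (HP _ _ Hb) eps He) as [d [Hd H]].
  exists d. split; [auto|]. intros. apply H; auto.
Qed.

Lemma cont_box_ext a1 b1 a2 b2 f g : (forall t x, f t x = g t x) -> cont_box a1 b1 a2 b2 f -> cont_box a1 b1 a2 b2 g.
Proof. intros H Hf t x Hb eps He. destruct (Hf t x Hb eps He) as [d [Hd H2]]. exists d. split; [auto|]. intros. rewrite <- !H. auto. Qed.

Lemma cont_box_sub a1 b1 a2 b2 f g : cont_box a1 b1 a2 b2 f -> cont_box a1 b1 a2 b2 g ->
  cont_box a1 b1 a2 b2 (fun t x => f t x - g t x).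
Proof.
  intros Hf Hg. apply (cont_box_ext _ _ _ _ (fun t x => f t x + (fun _ _ => -1) t x * g t x)).
  intros; ring. apply cont_box_add; auto. apply cont_box_mul; auto. apply cont_box_const.
Qed.

Lemma exp_cont : forall t, continuity_pt exp t.
Proof. intro t. apply derivable_continuous_pt. apply derivable_pt_exp. Qed.

Lemma maxprin (D Dt Dx Dxx : R -> R -> R) (C Bd : R) :
  0 <= C ->
  cont2_on closed_half D ->
  (forall t x, 0 <= t -> D t x <= Bd) ->
  (forall x, D 0 x <= 0) ->
  (forall t x, 0 < t -> 0 < D t x ->
     derivable_pt_lim (fun s => D s x) t (Dt t x) /\
     (exists r, 0 < r /\ forall y, Rabs (y - x) < r -> derivable_pt_lim (fun z => D t z) y (Dx t y)) /\
     derivable_pt_lim (fun y => Dx t y) x (Dxx t x) /\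
     Dt t x - Dxx t x <= C * D t x) ->
  forall t x, 0 <= t -> D t x <= 0.
Proof.
  intros HC Hc Hb H0 Hpde t1 x1 Ht1.
  destruct (Rle_or_lt (D t1 x1) 0) as [|Hpos]; auto. exfalso.
  destruct (Req_dec t1 0) as [->|Ht1']. specialize (H0 x1). lra.
  set (K := C + 1).
  set (E1 := exp (-K * t1) * D t1 x1).
  assert (HE1 : 0 < E1) by (unfold E1; apply Rmult_lt_0_compat; auto; apply exp_pos).
  set (delta := E1 / (2 * (x1 * x1 + 2 * t1 + 1))).
  assert (Hq : 0 < x1 * x1 + 2 * t1 + 1) by nra.
  assert (Hdelta : 0 < delta) by (unfold delta; apply Rdiv_lt_0_compat; lra).
  set (Phi := fun t x => exp (-K * t) * D t x - delta * (x * x + 2 * t)).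
  assert (HPhi1 : 0 < Phi t1 x1).
  { unfold Phi. fold E1. unfold delta.
    replace (E1 / (2 * (x1 * x1 + 2 * t1 + 1)) * (x1 * x1 + 2 * t1)) with
      (E1 * ((x1 * x1 + 2 * t1) / (2 * (x1 * x1 + 2 * t1 + 1)))) by (field; lra).
    assert ((x1 * x1 + 2 * t1) / (2 * (x1 * x1 + 2 * t1 + 1)) < 1).
    { apply (Rmult_lt_reg_r (2 * (x1 * x1 + 2 * t1 + 1))). lra.
      unfold Rdiv. rewrite Rmult_assoc, Rinv_l by lra. nra. }
    nra. }
  set (Bd' := Rmax Bd 0).
  set (Rr := Rabs x1 + Bd' / delta + 1).
  assert (HBd' : 0 <= Bd') by apply Rmax_r.
  assert (Hbd'd : 0 <= Bd' / delta) by (unfold Rdiv; apply Rmult_le_pos; [lra| left; apply Rinv_0_lt_compat; lra]).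
  assert (HRr : 1 <= Rr) by (unfold Rr; pose proof (Rabs_pos x1); lra).
  assert (Hfar : forall t x, 0 <= t -> Rr <= Rabs x -> Phi t x < 0).
  { intros t x Ht Hx. unfold Phi.
    assert (exp (-K * t) <= 1). { rewrite <- exp_0. destruct (Req_dec t 0) as [->|]. rewrite Rmult_0_r. lra.
       left. apply exp_increasing. unfold K. nra. }
    assert (exp (-K * t) * D t x <= Bd').
    { destruct (Rle_or_lt (D t x) 0). assert (0 < exp (-K*t)) by apply exp_pos. unfold Bd'. pose proof (Rmax_r Bd 0). nra.
      specialize (Hb t x Ht). unfold Bd'. pose proof (Rmax_l Bd 0). assert (0 < exp (-K*t)) by apply exp_pos. nra. }
    assert (x * x >= Rr * Rr). { assert (x*x = Rabs x * Rabs x) by (rewrite <- Rabs_mult; rewrite Rabs_pos_eq; nra). nra. }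
    assert (Hd1 : delta * (Bd'/delta) = Bd') by (field; lra).
    assert (Rr * Rr >= Bd'/delta + 1). { assert (Rr >= Bd'/delta + 1) by (unfold Rr; pose proof (Rabs_pos x1); lra). nra. }
    assert (delta * (x * x) >= delta * (Bd'/delta + 1)) by (apply Rmult_ge_compat_l; lra).
    assert (delta * (2 * t) >= 0) by nra.
    nra. }
  assert (Hcont : cont_box 0 t1 (-Rr) Rr Phi).
  { unfold Phi. apply cont_box_sub. apply cont_box_mul. apply cont_box_t.
    intro t. eapply dl_cont. apply expK_dl.
    apply (cont_box_of_cont2 closed_half). intros t x [[]]; unfold closed_half; lra. exact Hc.
    apply cont_box_mul. apply cont_box_const.
    apply cont_box_add. apply cont_box_x. intro x. eapply dl_cont. apply (dl_mult (fun y => y) (fun y => y)); apply dl_id.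
    apply cont_box_t. intro. eapply dl_cont. apply dl_scal. apply dl_id. }
  destruct (evt_box 0 t1 (-Rr) Rr Phi ltac:(lra) ltac:(lra) Hcont) as [ts [xs [[Hts Hxs] Hmax]]].
  assert (Hx1 : -Rr <= x1 <= Rr). { unfold Rr. unfold Rabs in *; destruct Rcase_abs; lra. }
  assert (Hge : Phi t1 x1 <= Phi ts xs) by (apply Hmax; split; lra).
  assert (Hts0 : 0 < ts).
  { destruct (Req_dec ts 0) as [->|]. 2: lra. exfalso. specialize (H0 xs).
    assert (Phi 0 xs <= 0). { unfold Phi. rewrite Rmult_0_r, exp_0. assert (0 <= delta * (xs*xs)) by (apply Rmult_le_pos; nra). lra. }
    lra. }
  assert (Hxs' : Rabs xs < Rr).
  { destruct (Rlt_or_le (Rabs xs) Rr); auto. specialize (Hfar ts xs ltac:(lra) H). lra. }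
  assert (HDs : 0 < D ts xs).
  { assert (Hp : 0 < Phi ts xs) by lra. unfold Phi in Hp. assert (0 < exp (-K*ts)) by apply exp_pos.
    assert (0 <= delta * (xs * xs + 2 * ts)) by (apply Rmult_le_pos; nra).
    destruct (Rle_or_lt (D ts xs) 0); auto. assert (exp (-K*ts) * D ts xs <= 0) by nra. lra. }
  destruct (Hpde ts xs Hts0 HDs) as [HDt [[r [Hr HDx]] [HDxx Hineq]]].
  set (e := exp (-K * ts)).
  assert (He : 0 < e) by apply exp_pos.
  assert (Hdt : derivable_pt_lim (fun s => Phi s xs) ts (e * Dt ts xs + (-K * e) * D ts xs - delta * 2)).
  { unfold Phi. apply dl_minus.
    replace (e * Dt ts xs + (-K * e) * D ts xs) with ((-K * exp (-K*ts)) * D ts xs + exp (-K*ts) * Dt ts xs) by (unfold e; ring).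
    apply (dl_mult (fun s => exp (-K * s)) (fun s => D s xs)).
    apply (expK_dl (-K)). exact HDt.
    replace (delta * 2) with (delta * (0 + 2 * 1)) by ring.
    apply dl_scal. apply (dl_plus (fun y => xs*xs) (fun y => 2 * y)). apply dl_const. apply dl_scal. apply dl_id. }
  assert (L1 : 0 <= e * Dt ts xs + (-K * e) * D ts xs - delta * 2).
  { eapply (left_max_deriv (fun s => Phi s xs) ts _ ts Hts0); [|exact Hdt].
    intros y Hy. apply Hmax. split; lra. }
  set (r' := Rmin r (Rr - Rabs xs)).
  assert (Hr' : 0 < r') by (apply Rmin_glb_lt; lra).
  assert (Hdx : forall y, Rabs (y - xs) < r' -> derivable_pt_lim (fun y => Phi ts y) y (e * Dx ts y - delta * (2 * y))).
  { intros y Hy. unfold Phi. apply dl_minus.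
    apply dl_scal. apply HDx. eapply Rlt_le_trans; [exact Hy| apply Rmin_l].
    replace (2 * y) with (1 * y + y * 1 + 0) by ring. apply dl_scal.
    apply (dl_plus (fun y => y * y) (fun y => 2 * ts)). apply (dl_mult (fun y => y) (fun y => y)); apply dl_id. apply dl_const. }
  assert (Hdxx : derivable_pt_lim (fun y => e * Dx ts y - delta * (2 * y)) xs (e * Dxx ts xs - delta * 2)).
  { apply dl_minus. apply dl_scal. exact HDxx.
    replace (delta * 2) with (delta * (2 * 1)) by ring. apply dl_scal. apply dl_scal. apply dl_id. }
  assert (L2 : e * Dxx ts xs - delta * 2 <= 0).
  { apply (max_deriv2 (fun y => Phi ts y) (fun y => e * Dx ts y - delta * (2 * y)) xs _ r' Hr').
    - intros y Hy. apply Hmax. split. lra.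
      assert (Rabs (y - xs) < Rr - Rabs xs) by (eapply Rlt_le_trans; [exact Hy|apply Rmin_r]).
      revert H Hxs'. unfold Rabs. repeat destruct Rcase_abs; lra.
    - exact Hdx.
    - exact Hdxx. }
  assert (e * (Dt ts xs - Dxx ts xs) <= e * (C * D ts xs)) by (apply Rmult_le_compat_l; lra).
  unfold K in L1. nra.
Qed.

Lemma sol_facts d r a b u0 v0 u v : is_solution_11 d r a b u0 v0 u v ->
  exists B ut ux uxx, 1 <= B /\ (forall t x, 0 <= t -> Rabs (u t x) <= B /\ Rabs (v t x) <= B) /\
    (forall x, u 0 x = u0 x) /\ classical_C12 u ut ux uxx /\
    (forall t x, 0 < t -> ut t x - uxx t x = u t x * (1 - u t x - a * v t x)).
Proof.
  intros [[B HB] [H0 [ut [ux [uxx [vt [vx [vxx [Hu [Hv Heq]]]]]]]]]].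
  exists (Rmax B 1), ut, ux, uxx. split. apply Rmax_r. split.
  intros t x Ht. destruct (HB t x Ht). split; eapply Rle_trans; eauto; apply Rmax_l.
  split. intro x; apply H0. split; auto. intros t x Ht; apply Heq; auto.
Qed.

Lemma cont2_opp P f : cont2_on P f -> cont2_on P (fun t x => - f t x).
Proof.
  intros H t x Hp eps He. destruct (H t x Hp eps He) as [d [Hd H2]]. exists d. split; [auto|].
  intros. replace (- f t' x' - - f t x) with (- (f t' x' - f t x)) by ring. rewrite Rabs_Ropp. auto.
Qed.

Lemma cont2_sub P f g : cont2_on P f -> cont2_on P g -> cont2_on P (fun t x => f t x - g t x).
Proof.
  intros Hf Hg t x Hp eps He.
  destruct (Hf t x Hp (eps/2)) as [d1 [Hd1 H1]]. lra.
  destruct (Hg t x Hp (eps/2)) as [d2 [Hd2 H2]]. lra.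
  exists (Rmin d1 d2). split. apply Rmin_glb_lt; auto.
  intros t' x' Hp' Ht Hx.
  assert (Rabs (t'-t) < d1 /\ Rabs (t'-t) < d2) by (split; eapply Rlt_le_trans; eauto; [apply Rmin_l|apply Rmin_r]).
  assert (Rabs (x'-x) < d1 /\ Rabs (x'-x) < d2) by (split; eapply Rlt_le_trans; eauto; [apply Rmin_l|apply Rmin_r]).
  specialize (H1 t' x' Hp' ltac:(tauto) ltac:(tauto)).
  specialize (H2 t' x' Hp' ltac:(tauto) ltac:(tauto)).
  replace (f t' x' - g t' x' - (f t x - g t x)) with ((f t' x' - f t x) - (g t' x' - g t x)) by ring.
  eapply Rle_lt_trans. apply Rabs_triang. rewrite Rabs_Ropp. lra.
Qed.

Lemma cont2_of_box (f : R -> R -> R) : (forall a, 0 < a -> cont_box 0 a (-a) a f) -> cont2_on closed_half f.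
Proof.
  intros H t x Ht eps He. unfold closed_half in Ht.
  set (a := t + Rabs x + 1).
  assert (Ha : 0 < a) by (unfold a; pose proof (Rabs_pos x); lra).
  assert (Hb : box 0 a (-a) a t x) by (unfold box, a; unfold Rabs; destruct Rcase_abs; lra).
  destruct (H a Ha t x Hb eps He) as [d [Hd H2]].
  exists (Rmin d 1). split. apply Rmin_glb_lt; lra.
  intros t' x' Ht' Htt Hxx. unfold closed_half in Ht'.
  assert (Rabs (t'-t) < d /\ Rabs (t'-t) < 1) by (split; eapply Rlt_le_trans; eauto; [apply Rmin_l|apply Rmin_r]).
  assert (Rabs (x'-x) < d /\ Rabs (x'-x) < 1) by (split; eapply Rlt_le_trans; eauto; [apply Rmin_l|apply Rmin_r]).
  apply H2; try tauto. unfold box, a. revert H0 H1. unfold Rabs. repeat destruct Rcase_abs; lra.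
Qed.

Lemma u_nonneg d r a b u0 v0 u v : 0 < a < 1 -> H_inf u0 v0 -> is_solution_11 d r a b u0 v0 u v ->
  forall t x, 0 <= t -> 0 <= u t x.
Proof.
  intros Ha Hi Hs.
  destruct (sol_facts _ _ _ _ _ _ _ _ Hs) as [B [ut [ux [uxx [HB [Hb [H0 [Hc Heq]]]]]]]].
  destruct Hc as [Hcu [_ [_ [_ Hder]]]].
  intros t x Ht.
  assert (Hm := maxprin (fun t x => - u t x) (fun t x => - ut t x) (fun t x => - ux t x) (fun t x => - uxx t x)
     (1 + B + a * B) B ltac:(nra) (cont2_opp _ _ Hcu)).
  cut (- u t x <= 0). lra. apply Hm; auto.
  - intros t' x' Ht'. destruct (Hb t' x' Ht') as [Hu _]. revert Hu. unfold Rabs. destruct Rcase_abs; lra.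
  - intros y. rewrite H0. destruct Hi as [_ [_ [Hi _]]]. destruct (Hi y). lra.
  - intros t' x' Ht' Hpos. destruct (Hder t' x' Ht') as [D1 [D2 D3]]. split; [|split; [|split]].
    + apply dl_opp. exact D1.
    + exists 1. split. lra. intros y _. apply dl_opp. apply Hder; auto.
    + apply dl_opp. exact D3.
    + specialize (Heq t' x' Ht'). destruct (Hb t' x' ltac:(lra)) as [Hu Hv].
      replace (- ut t' x' - - uxx t' x') with (- (ut t' x' - uxx t' x')) by ring. rewrite Heq.
      assert (1 - u t' x' - a * v t' x' <= 1 + B + a * B).
      { revert Hu Hv. unfold Rabs. repeat destruct Rcase_abs; nra. }
      nra.
Qed.

Lemma u_upper d r a b u0 v0 u v : 0 < a < 1 -> H_inf u0 v0 -> is_solution_11 d r a b u0 v0 u v ->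
  exists C0 x0, 0 <= C0 /\ forall lam, 0 < lam -> forall t x, 0 <= t ->
    u t x <= exp ((lam * x0 + (lam * lam + C0) * t) + (- lam) * x).
Proof.
  intros Ha Hi Hs.
  assert (Hnn := u_nonneg _ _ _ _ _ _ _ _ Ha Hi Hs).
  destruct (sol_facts _ _ _ _ _ _ _ _ Hs) as [B [ut [ux [uxx [HB [Hb [H0 [Hc Heq]]]]]]]].
  destruct Hc as [Hcu [_ [_ [_ Hder]]]].
  destruct Hi as [_ [_ [Hi [[th0 [x0 [Hth [Hx0 [Hleft Hright]]]]] _]]]].
  exists (1 + B + a * B), x0. split. nra. intros lam Hlam.
  set (mu := lam * lam + (1 + B + a * B)).
  set (Z := fun t x => exp ((lam * x0 + mu * t) + (- lam) * x)).
  intros t x Ht. fold mu. change (u t x <= Z t x).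
  assert (HZc : cont2_on closed_half Z).
  { apply cont2_of_box. intros a0 Ha0. unfold Z.
    apply (cont_box_ext _ _ _ _ (fun t x => exp (lam * x0 + mu * t) * exp ((- lam) * x))).
    intros; rewrite <- exp_plus; f_equal; ring.
    apply cont_box_mul. apply cont_box_t. intro s. eapply dl_cont.
    apply (dl_ext (fun y => exp (lam * x0 + mu * y))). auto. apply dl_expaff.
    apply cont_box_x. intro s. eapply dl_cont. apply (dl_ext (fun y => exp (0 + (-lam) * y))). intro; rewrite Rplus_0_l; auto. apply dl_expaff. }
  assert (Hm := maxprin (fun t x => u t x - Z t x) (fun t x => ut t x - mu * Z t x)
     (fun t x => ux t x - (- lam) * Z t x) (fun t x => uxx t x - lam * lam * Z t x)
     (1 + B + a * B) B ltac:(nra) (cont2_sub _ _ _ Hcu HZc)).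
  cut (u t x - Z t x <= 0). lra. apply Hm; auto.
  - intros t' x' Ht'. destruct (Hb t' x' Ht') as [Hu _]. assert (0 < Z t' x') by apply exp_pos.
    revert Hu. unfold Rabs. destruct Rcase_abs; lra.
  - intros y. rewrite H0. unfold Z. rewrite Rmult_0_r, Rplus_0_r.
    destruct (Rle_or_lt x0 y). rewrite Hright; auto. pose proof (exp_pos (lam * x0 + - lam * y)); lra.
    destruct (Hi y) as [[_ Hu1] _]. assert (1 < exp (lam*x0 + -lam*y)) by (rewrite <- exp_0; apply exp_increasing; nra). lra.
  - intros t' x' Ht' Hpos. destruct (Hder t' x' Ht') as [D1 [D2 D3]]. split; [|split; [|split]].
    + apply dl_minus. exact D1. unfold Z.
      apply (dl_ext (fun s => exp ((lam * x0 + (- lam) * x') + mu * s))). intro; f_equal; ring.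
      apply (dl_eq _ _ (mu * exp ((lam * x0 + (- lam) * x') + mu * t'))). f_equal; f_equal; ring. apply dl_expaff.
    + exists 1. split. lra. intros y _. apply dl_minus. apply Hder; auto. unfold Z. apply dl_expaff.
    + apply dl_minus. exact D3.
      apply (dl_eq _ _ (- lam * (- lam * Z t' x'))). ring. apply dl_scal. unfold Z. apply dl_expaff.
    + specialize (Heq t' x' Ht'). destruct (Hb t' x' ltac:(lra)) as [Hu Hv].
      replace (ut t' x' - mu * Z t' x' - (uxx t' x' - lam * lam * Z t' x')) with ((ut t' x' - uxx t' x') - (1 + B + a * B) * Z t' x') by (unfold mu; ring).
      rewrite Heq.
      assert (1 - u t' x' - a * v t' x' <= 1 + B + a * B).
      { revert Hu Hv. unfold Rabs. repeat destruct Rcase_abs; nra. }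
      assert (0 <= u t' x') by (apply Hnn; lra).
      nra.
Qed.

Definition Q (th : R) := cos (clamp (-(PI/2)) (PI/2) th) * cos (clamp (-(PI/2)) (PI/2) th).

Lemma cos_cont x : continuity_pt cos x.
Proof. eapply dl_cont. apply derivable_pt_lim_cos. Qed.

Lemma clamp_cont a b x : a <= b -> continuity_pt (clamp a b) x.
Proof.
  intro H. apply cont_pt_intro. intros eps He. exists eps. split; auto.
  intros y Hy. eapply Rle_lt_trans. apply clamp_lip; auto. auto.
Qed.

Lemma PI2_pos : 0 < PI / 2.
Proof. apply PI2_RGT_0. Qed.

Lemma Q_cont th : continuity_pt Q th.
Proof.
  unfold Q. pose proof PI2_pos.
  assert (Hc : continuity_pt (fun y => cos (clamp (-(PI/2)) (PI/2) y)) th).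
  { apply (continuity_pt_comp (clamp (-(PI/2)) (PI/2)) cos). apply clamp_cont; lra. apply cos_cont. }
  exact (continuity_pt_mult _ _ _ Hc Hc).
Qed.

Lemma Q_bounds th : 0 <= Q th <= 1.
Proof.
  unfold Q. set (c := cos _). pose proof (COS_bound (clamp (-(PI/2)) (PI/2) th)). fold c in H. nra.
Qed.

Lemma Q_loc th : Rabs th < PI/2 -> Q th = cos th * cos th.
Proof. intro H. unfold Q. rewrite clamp_id. auto. revert H; unfold Rabs; destruct Rcase_abs; lra. Qed.

Lemma Q_pos_inside th : 0 < Q th -> Rabs th < PI/2.
Proof.
  intro H. destruct (Rlt_or_le (Rabs th) (PI/2)) as [|Hle]; auto. exfalso.
  unfold Q, clamp, Rmax, Rmin in H. revert H. pose proof PI2_pos.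
  repeat destruct Rle_dec; unfold Rabs in Hle; destruct Rcase_abs in Hle;
  try rewrite cos_neg; try rewrite cos_PI2; try lra.
  all: intro Hp; assert (Hth : th = PI/2 \/ th = -(PI/2)) by lra;
    destruct Hth as [->| ->]; try rewrite cos_neg in Hp; rewrite cos_PI2 in Hp; lra.
Qed.

Lemma Q_lower th : Rabs th <= 1 -> cos 1 * cos 1 <= Q th.
Proof.
  intro H. pose proof PI2_1. rewrite Q_loc by lra.
  assert (Hc1 : 0 < cos 1) by (apply cos_gt_0; lra).
  assert (cos 1 <= cos th).
  { assert (cos th = cos (Rabs th)) by (unfold Rabs; destruct Rcase_abs; [rewrite cos_neg|]; auto).
    rewrite H1. destruct (Req_dec (Rabs th) 1) as [->|]. lra.
    left. apply cos_decreasing_1; try lra; pose proof (Rabs_pos th); lra. }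
  nra.
Qed.

Lemma cont_box_comp_aff a1 b1 a2 b2 (h : R -> R) p q r0 : (forall z, continuity_pt h z) ->
  cont_box a1 b1 a2 b2 (fun t x => h (p * t + q * x + r0)).
Proof.
  intros Hh t x _ eps He. destruct (cont_pt_elim h _ (Hh (p * t + q * x + r0)) eps He) as [d [Hd H2]].
  set (m := Rabs p + Rabs q + 1).
  assert (Hm : 0 < m) by (unfold m; pose proof (Rabs_pos p); pose proof (Rabs_pos q); lra).
  exists (d / m). split. apply Rdiv_lt_0_compat; auto.
  intros t' x' _ Ht Hx. apply H2.
  replace (p * t' + q * x' + r0 - (p * t + q * x + r0)) with (p * (t' - t) + q * (x' - x)) by ring.
  eapply Rle_lt_trans. apply Rabs_triang. rewrite !Rabs_mult.
  assert (Rabs p * Rabs (t' - t) <= Rabs p * (d/m)) by (apply Rmult_le_compat_l; [apply Rabs_pos|lra]).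
  assert (Rabs q * Rabs (x' - x) <= Rabs q * (d/m)) by (apply Rmult_le_compat_l; [apply Rabs_pos|lra]).
  assert (Rabs p * (d/m) + Rabs q * (d/m) < d).
  { replace (Rabs p * (d/m) + Rabs q * (d/m)) with (d * ((Rabs p + Rabs q) / m)) by (field; lra).
    assert ((Rabs p + Rabs q) / m < 1).
    { apply (Rmult_lt_reg_r m); auto. unfold Rdiv. rewrite Rmult_assoc, Rinv_l by lra. unfold m; lra. }
    nra. }
  lra.
Qed.

Lemma dl_cos2aff al be s : derivable_pt_lim (fun y => cos (al + be * y) * cos (al + be * y)) s
  (-2 * be * cos (al + be * s) * sin (al + be * s)).
Proof.
  assert (Hc : derivable_pt_lim (fun y => cos (al + be * y)) s (- sin (al + be * s) * (0 + be * 1))).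
  { apply (dl_comp (fun y => al + be * y) cos). apply dl_plus. apply dl_const. apply dl_scal. apply dl_id. apply derivable_pt_lim_cos. }
  eapply dl_eq; [|apply (dl_mult _ _ _ _ _ Hc Hc)]. ring.
Qed.

Lemma dl_cossinaff al be s : derivable_pt_lim (fun y => cos (al + be * y) * sin (al + be * y)) s
  (be * (cos (al + be * s) * cos (al + be * s) - sin (al + be * s) * sin (al + be * s))).
Proof.
  assert (Hc : derivable_pt_lim (fun y => cos (al + be * y)) s (- sin (al + be * s) * (0 + be * 1))).
  { apply (dl_comp (fun y => al + be * y) cos). apply dl_plus. apply dl_const. apply dl_scal. apply dl_id. apply derivable_pt_lim_cos. }
  assert (Hs : derivable_pt_lim (fun y => sin (al + be * y)) s (cos (al + be * s) * (0 + be * 1))).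
  { apply (dl_comp (fun y => al + be * y) sin). apply dl_plus. apply dl_const. apply dl_scal. apply dl_id. apply derivable_pt_lim_sin. }
  eapply dl_eq; [|apply (dl_mult _ _ _ _ _ Hc Hs)]. ring.
Qed.

Lemma aff_nbhd al be t : Rabs (al + be * t) < PI/2 -> exists r, 0 < r /\
  forall s, Rabs (s - t) < r -> Rabs (al + be * s) < PI/2.
Proof.
  intro H. set (g := PI/2 - Rabs (al + be * t)).
  exists (g / (Rabs be + 1)). split. apply Rdiv_lt_0_compat. unfold g; lra. pose proof (Rabs_pos be); lra.
  intros s Hs. replace (al + be * s) with ((al + be * t) + be * (s - t)) by ring.
  eapply Rle_lt_trans. apply Rabs_triang. rewrite Rabs_mult.
  assert (Rabs be * Rabs (s - t) <= Rabs be * (g / (Rabs be + 1))) by (apply Rmult_le_compat_l; [apply Rabs_pos|lra]).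
  assert (Rabs be * (g / (Rabs be + 1)) < g).
  { assert (0 < g) by (unfold g; lra). pose proof (Rabs_pos be).
    replace (Rabs be * (g / (Rabs be + 1))) with (g * (1 - / (Rabs be + 1))) by (field; lra).
    assert (0 < / (Rabs be+1)) by (apply Rinv_0_lt_compat; lra). nra. }
  unfold g in *; lra.
Qed.

Lemma u_lower d r a b u0 v0 u v : 0 < a < 1 -> H_inf u0 v0 -> is_solution_11 d r a b u0 v0 u v ->
  exists C1 th0, 0 < th0 /\ 0 <= C1 /\ forall kap xi c, 0 < kap <= 1 -> kap * xi + 2 <= 0 ->
    forall t y, 0 <= t -> th0 * exp (- (C1 + 2 + c * c) * t) * Q (kap * (y - xi - c * t)) <= u t y.
Proof.
  intros Ha Hi Hs.
  assert (Hnn := u_nonneg _ _ _ _ _ _ _ _ Ha Hi Hs).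
  destruct (sol_facts _ _ _ _ _ _ _ _ Hs) as [B [ut [ux [uxx [HB [Hb [H0 [Hc Heq]]]]]]]].
  destruct Hc as [Hcu [_ [_ [_ Hder]]]].
  destruct Hi as [_ [_ [Hi [[th0 [x0 [Hth [Hx0 [Hleft Hright]]]]] _]]]].
  exists (B + a * B), th0. split; [auto|]. split. nra.
  intros kap xi c Hkap Hxi.
  set (K := B + a * B + 2 + c * c).
  set (z := fun t y => th0 * exp (- K * t) * Q (kap * (y - xi - c * t))).
  set (th := fun t y => (- kap * xi + kap * y) + (- kap * c) * t).
  assert (Hth_eq : forall t y, kap * (y - xi - c * t) = th t y) by (intros; unfold th; ring).
  set (Ft := fun t y => th0 * exp (- K * t) * (- K * (cos (th t y) * cos (th t y)) + 2 * kap * c * cos (th t y) * sin (th t y))).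
  set (Fx := fun t y => th0 * exp (- K * t) * (-2 * kap) * (cos (th t y) * sin (th t y))).
  set (Fxx := fun t y => th0 * exp (- K * t) * (-2 * kap) * (kap * (cos (th t y) * cos (th t y) - sin (th t y) * sin (th t y)))).
  assert (Hzc : cont2_on closed_half z).
  { apply cont2_of_box. intros a0 Ha0. unfold z.
    apply cont_box_mul. apply cont_box_mul. apply cont_box_const. apply cont_box_t. intro s. eapply dl_cont. apply expK_dl.
    apply (cont_box_ext _ _ _ _ (fun t y => Q ((- kap * c) * t + kap * y + (- kap * xi)))). intros; f_equal; ring.
    apply cont_box_comp_aff. apply Q_cont. }
  assert (Hm := maxprin (fun t x => z t x - u t x) (fun t x => Ft t x - ut t x)
     (fun t x => Fx t x - ux t x) (fun t x => Fxx t x - uxx t x)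
     (1 + B + a * B) (th0 + B) ltac:(nra) (cont2_sub _ _ _ Hzc Hcu)).
  intros t y Ht. change (z t y <= u t y). cut (z t y - u t y <= 0). lra. apply Hm; auto.
  - intros t' x' Ht'. destruct (Hb t' x' Ht') as [Hu _]. unfold z.
    assert (0 < exp (- K * t')) by apply exp_pos. assert (exp (-K * t') <= 1).
    { rewrite <- exp_0. destruct (Req_dec t' 0) as [->|]. rewrite Rmult_0_r. lra. left; apply exp_increasing. assert (0 < K) by (unfold K; nra). nra. }
    destruct (Q_bounds (kap * (x' - xi - c * t'))) as [Hq1 Hq2].
    assert (th0 * exp (- K * t') * Q (kap * (x' - xi - c * t')) <= th0) by (assert (exp (- K * t') * Q (kap * (x' - xi - c * t')) <= 1) by nra; nra).
    revert Hu. unfold Rabs. destruct Rcase_abs; lra.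
  - intros y0. simpl. rewrite H0. unfold z. rewrite Rmult_0_r, exp_0, Rmult_1_r.
    destruct (Rlt_or_le 0 (Q (kap * (y0 - xi - c * 0)))) as [Hq|Hq].
    + apply Q_pos_inside in Hq. assert (y0 <= 0).
      { pose proof PI2_1. pose proof PI_4. assert (kap * (y0 - xi) < 2) by (revert Hq; rewrite Rmult_0_r, Rminus_0_r; unfold Rabs; destruct Rcase_abs; lra). nra. }
      destruct (Hleft y0 H). destruct (Q_bounds (kap * (y0 - xi - c * 0))). nra.
    + destruct (Q_bounds (kap * (y0 - xi - c * 0))). destruct (Hi y0) as [[Hu0 _] _]. nra.
  - intros t' y' Ht' Hpos.
    assert (Hzpos : 0 < z t' y') by (pose proof (Hnn t' y' ltac:(lra)); lra).
    assert (HQ : 0 < Q (kap * (y' - xi - c * t'))).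
    { unfold z in Hzpos. destruct (Rle_or_lt (Q (kap * (y' - xi - c * t'))) 0); auto.
      destruct (Q_bounds (kap * (y' - xi - c * t'))) as [Hq1 Hq2]. assert (Hq0 : Q (kap * (y' - xi - c * t')) = 0) by lra.
      rewrite Hq0, Rmult_0_r in Hzpos. lra. }
    apply Q_pos_inside in HQ. rewrite Hth_eq in HQ.
    assert (Hloc_y : forall s, Rabs (th s y') < PI/2 -> exists r, 0 < r /\ forall w, Rabs (w - y') < r ->
       z s w = th0 * exp (- K * s) * (cos ((- kap * xi - kap * c * s) + kap * w) * cos ((- kap * xi - kap * c * s) + kap * w))).
    { intros s Hss. destruct (aff_nbhd (- kap * xi - kap * c * s) kap y') as [r0 [Hr0 Hr0']].
      replace (- kap * xi - kap * c * s + kap * y') with (th s y') by (unfold th; ring). exact Hss.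
      exists r0. split; auto. intros w Hw. unfold z. rewrite Q_loc. do 3 f_equal; ring.
      replace (kap * (w - xi - c * s)) with (- kap * xi - kap * c * s + kap * w) by ring. auto. }
    destruct (Hder t' y' Ht') as [D1 [D2 D3]]. split; [|split; [|split]].
    + apply dl_minus; [|exact D1].
      destruct (aff_nbhd (- kap * xi + kap * y') (- kap * c) t') as [r0 [Hr0 Hr0']]. exact HQ.
      apply (dl_loc (fun s => th0 * exp (- K * s) * (cos ((- kap * xi + kap * y') + (- kap * c) * s) * cos ((- kap * xi + kap * y') + (- kap * c) * s))) _ _ _ r0 Hr0).
      { intros s Hss. unfold z. rewrite Q_loc. do 3 f_equal; ring.
        replace (kap * (y' - xi - c * s)) with (- kap * xi + kap * y' + - kap * c * s) by ring. auto. }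
      unfold Ft. eapply dl_eq; [|apply dl_mult; [apply dl_scal; apply expK_dl| apply dl_cos2aff]].
      unfold th. ring.
    + destruct (aff_nbhd (- kap * xi - kap * c * t') kap y') as [r0 [Hr0 Hr0']].
      { replace (- kap * xi - kap * c * t' + kap * y') with (th t' y') by (unfold th; ring). auto. }
      exists r0. split; auto. intros w Hw. apply dl_minus; [|apply Hder; auto].
      assert (Hw' : Rabs (th t' w) < PI/2).
      { replace (th t' w) with (- kap * xi - kap * c * t' + kap * w) by (unfold th; ring). auto. }
      destruct (aff_nbhd (- kap * xi - kap * c * t') kap w) as [r2 [Hr2 Hr2']].
      { replace (- kap * xi - kap * c * t' + kap * w) with (th t' w) by (unfold th; ring). auto. }
      apply (dl_loc (fun w0 => th0 * exp (- K * t') * (cos ((- kap * xi - kap * c * t') + kap * w0) * cos ((- kap * xi - kap * c * t') + kap * w0))) _ _ _ r2 Hr2).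
      { intros w0 Hw0. unfold z. rewrite Q_loc. do 3 f_equal; ring.
        replace (kap * (w0 - xi - c * t')) with (- kap * xi - kap * c * t' + kap * w0) by ring. auto. }
      unfold Fx. eapply dl_eq; [|apply dl_scal; apply dl_cos2aff].
      replace (th t' w) with (- kap * xi - kap * c * t' + kap * w) by (unfold th; ring). ring.
    + apply dl_minus; [|exact D3]. unfold Fx.
      apply (dl_ext (fun w => th0 * exp (- K * t') * (-2 * kap) * (cos ((- kap * xi - kap * c * t') + kap * w) * sin ((- kap * xi - kap * c * t') + kap * w)))).
      { intro w. unfold th. do 2 f_equal; f_equal; ring. }
      unfold Fxx. eapply dl_eq; [|apply dl_scal; apply dl_cossinaff].
      replace (th t' y') with (- kap * xi - kap * c * t' + kap * y') by (unfold th; ring). ring.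
    + specialize (Heq t' y' Ht'). destruct (Hb t' y' ltac:(lra)) as [Hu Hv].
      replace (Ft t' y' - ut t' y' - (Fxx t' y' - uxx t' y')) with ((Ft t' y' - Fxx t' y') - (ut t' y' - uxx t' y')) by ring.
      rewrite Heq.
      set (cc := 1 - u t' y' - a * v t' y').
      assert (Hc1 : cc <= 1 + B + a * B) by (unfold cc; revert Hu Hv; unfold Rabs; repeat destruct Rcase_abs; nra).
      assert (Hc2 : - cc <= B + a * B) by (unfold cc; revert Hu Hv; unfold Rabs; repeat destruct Rcase_abs; nra).
      assert (Hz : z t' y' = th0 * exp (- K * t') * (cos (th t' y') * cos (th t' y'))).
      { unfold z. rewrite Q_loc. rewrite Hth_eq. auto. rewrite Hth_eq. auto. }
      set (co := cos (th t' y')) in *. set (si := sin (th t' y')) in *.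
      set (E := th0 * exp (- K * t')).
      assert (HE : 0 < E) by (unfold E; apply Rmult_lt_0_compat; [auto| apply exp_pos]).
      assert (HFF : Ft t' y' - Fxx t' y' = E * (- K * (co * co) + 2 * kap * c * co * si + 2 * kap * kap * (co * co - si * si))).
      { unfold Ft, Fxx, E. fold co si. ring. }
      assert (Hbr : - K * (co * co) + 2 * kap * c * co * si + 2 * kap * kap * (co * co - si * si) + (B + a * B) * (co * co) <= 0).
      { unfold K. assert (0 <= (c*co - kap*si)*(c*co - kap*si)) by apply Rle_0_sqr.
        assert (2 * kap * c * co * si <= c * c * (co * co) + kap * kap * (si * si)) by nra.
        assert (kap * kap <= 1) by nra.
        assert (0 <= (1 - kap*kap) * (co * co)) by (apply Rmult_le_pos; [lra| apply Rle_0_sqr]).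
        assert (0 <= kap * kap * (si * si)) by (apply Rmult_le_pos; apply Rle_0_sqr).
        lra. }
      assert (Hzz : z t' y' = E * (co * co)) by (rewrite Hz; unfold E; ring).
      rewrite HFF. rewrite Hzz in Hpos |- *.
      assert (0 <= co * co) by nra.
      assert (E * (- K * (co * co) + 2 * kap * c * co * si + 2 * kap * kap * (co * co - si * si)) <= - (B + a * B) * (E * (co * co))) by nra.
      assert (cc * (E * (co * co) - u t' y') <= (1 + B + a * B) * (E * (co * co) - u t' y')) by nra.
      assert (- cc * (E * (co * co)) <= (B + a * B) * (E * (co * co))) by nra.
      nra.
Qed.

Definition near (delta t x e t' x' : R) := 0 < e < delta /\ 0 <= t' /\ Rabs (t' - t) < delta /\ Rabs (x' - x) < delta.

Lemma weps_upper u e t x Lb : 0 < e -> 0 < Lb -> Lb <= resc u e t x ->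
  Rbar_le (weps u e t x) (Finite (- e * ln Lb)).
Proof.
  intros He HL H. unfold weps. destruct Rlt_dec as [Hp|Hp]; [|lra]. simpl.
  assert (ln Lb <= ln (resc u e t x)). { destruct H as [H|H]. left. apply ln_increasing; auto. rewrite H; lra. }
  nra.
Qed.

Lemma weps_lower u e t x Ub : 0 < e -> 0 < Ub -> resc u e t x <= Ub ->
  Rbar_le (Finite (- e * ln Ub)) (weps u e t x).
Proof.
  intros He HU H. unfold weps. destruct Rlt_dec as [Hp|Hp]; simpl; auto.
  assert (ln (resc u e t x) <= ln Ub). { destruct H as [H|H]. left. apply ln_increasing; auto. rewrite H; lra. }
  nra.
Qed.

Lemma Rbar_le_lt_trans x y z : Rbar_le x y -> Rbar_lt y z -> Rbar_lt x z.
Proof. destruct x, y, z; simpl; auto; try lra; tauto. Qed.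
Lemma Rbar_lt_le_trans x y z : Rbar_lt x y -> Rbar_le y z -> Rbar_lt x z.
Proof. destruct x, y, z; simpl; auto; try lra; tauto. Qed.

Lemma common_point delta1 delta2 t x : 0 <= t -> 0 < delta1 -> 0 < delta2 ->
  exists e, near delta1 t x e t x /\ near delta2 t x e t x.
Proof.
  intros Ht H1 H2. exists (Rmin delta1 delta2 / 2).
  assert (0 < Rmin delta1 delta2) by (apply Rmin_glb_lt; auto).
  pose proof (Rmin_l delta1 delta2). pose proof (Rmin_r delta1 delta2).
  unfold near. rewrite !Rminus_diag, Rabs_R0. repeat split; lra.
Qed.

Definition ev_lt (f : R -> R -> R -> Rbar) t x M := exists delta, 0 < delta /\
  forall e t' x', near delta t x e t' x' -> Rbar_lt (f e t' x') (Finite M).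
Definition ev_gt (f : R -> R -> R -> Rbar) t x M := exists delta, 0 < delta /\
  forall e t' x', near delta t x e t' x' -> Rbar_lt (Finite M) (f e t' x').

Lemma limsup_ev f t x L M : hr_limsup f t x L -> Rbar_lt L (Finite M) -> ev_lt f t x M.
Proof. intros [H1 _] H. destruct (H1 M H) as [d [Hd H2]]. exists d. split; auto. intros e t' x' [? [? []]]. auto. Qed.
Lemma liminf_ev f t x L M : hr_liminf f t x L -> Rbar_lt (Finite M) L -> ev_gt f t x M.
Proof. intros [H1 _] H. destruct (H1 M H) as [d [Hd H2]]. exists d. split; auto. intros e t' x' [? [? []]]. auto. Qed.

Lemma ev_contra f t x M1 M2 : 0 <= t -> M1 <= M2 -> ev_lt f t x M1 -> ev_gt f t x M2 -> False.
Proof.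
  intros Ht HM [d1 [Hd1 H1]] [d2 [Hd2 H2]].
  destruct (common_point d1 d2 t x Ht Hd1 Hd2) as [e [A B]].
  specialize (H1 _ _ _ A). specialize (H2 _ _ _ B).
  destruct (f e t x); simpl in *; lra.
Qed.

Lemma limsup_le f t x L M : 0 <= t -> hr_limsup f t x L -> ev_lt f t x M -> Rbar_le L (Finite M).
Proof.
  intros Ht [_ H2] [d [Hd H]]. destruct L as [l| |]; simpl; auto.
  - destruct (Rle_or_lt l M) as [|Hl]; auto. exfalso.
    destruct (H2 M Hl d Hd) as [e [t' [x' [He [Ht' [Htt [Hxx Hf]]]]]]].
    specialize (H e t' x' (conj He (conj Ht' (conj Htt Hxx)))). destruct (f e t' x'); simpl in *; lra.
  - destruct (H2 M I d Hd) as [e [t' [x' [He [Ht' [Htt [Hxx Hf]]]]]]].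
    specialize (H e t' x' (conj He (conj Ht' (conj Htt Hxx)))). destruct (f e t' x'); simpl in *; lra.
Qed.

Lemma liminf_ge f t x L M : 0 <= t -> hr_liminf f t x L -> ev_gt f t x M -> Rbar_le (Finite M) L.
Proof.
  intros Ht [_ H2] [d [Hd H]]. destruct L as [l| |]; simpl; auto.
  - destruct (Rle_or_lt M l) as [|Hl]; auto. exfalso.
    destruct (H2 M Hl d Hd) as [e [t' [x' [He [Ht' [Htt [Hxx Hf]]]]]]].
    specialize (H e t' x' (conj He (conj Ht' (conj Htt Hxx)))). destruct (f e t' x'); simpl in *; lra.
  - destruct (H2 M I d Hd) as [e [t' [x' [He [Ht' [Htt [Hxx Hf]]]]]]].
    specialize (H e t' x' (conj He (conj Ht' (conj Htt Hxx)))). destruct (f e t' x'); simpl in *; lra.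
Qed.

Lemma limsup_ge f t x L M : 0 <= t -> hr_limsup f t x L -> ev_gt f t x M -> Rbar_le (Finite M) L.
Proof.
  intros Ht HL Hg. destruct L as [l| |]; simpl; auto.
  - destruct (Rle_or_lt M l) as [|Hl]; auto. exfalso.
    apply (ev_contra f t x ((l + M)/2) M Ht). lra. apply (limsup_ev f t x (Finite l)); auto. simpl; lra. auto.
  - apply (ev_contra f t x (M - 1) M Ht). lra. apply (limsup_ev f t x m_infty); auto. exact I. auto.
Qed.

Lemma liminf_le f t x L M : 0 <= t -> hr_liminf f t x L -> ev_lt f t x M -> Rbar_le L (Finite M).
Proof.
  intros Ht HL Hg. destruct L as [l| |]; simpl; auto.
  - destruct (Rle_or_lt l M) as [|Hl]; auto. exfalso.
    apply (ev_contra f t x M ((l + M)/2) Ht). lra. auto. apply (liminf_ev f t x (Finite l)); auto. simpl; lra.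
  - apply (ev_contra f t x M (M + 1) Ht). lra. auto. apply (liminf_ev f t x p_infty); auto. exact I.
Qed.

Lemma Rbar_le_antisym_fin L (w : R) : Rbar_le L (Finite w) -> Rbar_le (Finite w) L -> L = Finite w.
Proof. destruct L; simpl; intros; try tauto. f_equal; lra. Qed.

Section Est.
Variables (d r a b : R) (u0 v0 : R -> R) (u v : R -> R -> R).
Hypothesis Ha : 0 < a < 1.
Hypothesis Hi : H_inf u0 v0.
Hypothesis Hs : is_solution_11 d r a b u0 v0 u v.

Lemma ev_w_lower t x k : 0 < k -> ev_gt (weps u) t x (-k).
Proof.
  intros Hk. destruct (sol_facts _ _ _ _ _ _ _ _ Hs) as [B [_ [_ [_ [HB [Hb _]]]]]].
  assert (HlB : 0 <= ln B) by (rewrite <- ln_1; destruct HB as [HB|HB]; [left; apply ln_increasing; lra| rewrite HB; lra]).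
  exists (k / (ln B + 1)). split. apply Rdiv_lt_0_compat; lra.
  intros e t' x' [He [Ht' _]].
  eapply Rbar_lt_le_trans; [|apply (weps_lower u e t' x' B)]; try lra.
  - simpl. assert (e * ln B < k).
    { destruct HlB as [HlB|HlB]. apply Rlt_le_trans with (k / (ln B + 1) * ln B). apply Rmult_lt_compat_r; lra.
      replace (k / (ln B + 1) * ln B) with (k * (ln B / (ln B + 1))) by (field; lra).
      assert (ln B / (ln B + 1) <= 1). { apply (Rmult_le_reg_r (ln B + 1)). lra. unfold Rdiv. rewrite Rmult_assoc, Rinv_l by lra. lra. }
      nra. rewrite <- HlB. lra. }
    lra.
  - unfold resc. destruct (Hb (t'/e) (x'/e)) as [Hu _]. apply Rdiv_le_0_compat'; lra.
    revert Hu. unfold Rabs. destruct Rcase_abs; lra.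
Qed.

Lemma cos1_pos : 0 < cos 1 * cos 1.
Proof. assert (0 < cos 1) by (apply cos_gt_0; pose proof PI2_1; lra). nra. Qed.

Lemma ev_w_init_neg x k : x < 0 -> 0 < k -> ev_lt (weps u) 0 x k.
Proof.
  intros Hx Hk. destruct (u_lower _ _ _ _ _ _ _ _ Ha Hi Hs) as [C1 [th0 [Hth [HC1 Hlow]]]].
  set (P := th0 * (cos 1 * cos 1)). assert (HP : 0 < P) by (unfold P; pose proof cos1_pos; nra).
  set (K := C1 + 2 + 0 * 0). assert (HK : 0 < K) by (unfold K; lra).
  set (del := Rmin (- x / 2) (Rmin (k / (2 * K)) (k / (2 * (Rabs (ln P) + 1))))).
  assert (H1 : 0 < k / (2 * K)) by (apply Rdiv_lt_0_compat; lra).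
  assert (H2 : 0 < k / (2 * (Rabs (ln P) + 1))) by (apply Rdiv_lt_0_compat; pose proof (Rabs_pos (ln P)); lra).
  assert (Hd : 0 < del) by (unfold del; repeat apply Rmin_glb_lt; lra).
  assert (Hd1 : del <= - x / 2) by apply Rmin_l.
  assert (Hd2 : del <= k / (2 * K)) by (eapply Rle_trans; [apply Rmin_r| apply Rmin_l]).
  assert (Hd3 : del <= k / (2 * (Rabs (ln P) + 1))) by (eapply Rle_trans; [apply Rmin_r| apply Rmin_r]).
  exists del. split; auto.
  intros e t' x' [He [Ht' [Htt Hxx]]]. rewrite Rminus_0_r in Htt. rewrite Rabs_pos_eq in Htt by lra.
  assert (Hkap : 0 < 2 * e / (- x) <= 1).
  { split. apply Rdiv_lt_0_compat; lra. apply (Rmult_le_reg_r (-x)). lra. unfold Rdiv. rewrite Rmult_assoc, Rinv_l by lra. lra. }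
  specialize (Hlow (2 * e / (- x)) (x / e) 0 Hkap).
  assert (Hxi : 2 * e / - x * (x / e) + 2 <= 0) by (right; field; lra).
  specialize (Hlow Hxi (t' / e) (x' / e) ltac:(apply Rdiv_le_0_compat'; lra)).
  assert (Harg : Rabs (2 * e / - x * (x' / e - x / e - 0 * (t' / e))) <= 1).
  { replace (2 * e / - x * (x' / e - x / e - 0 * (t' / e))) with (2 * (x' - x) / (- x)) by (field; lra).
    unfold Rdiv. rewrite Rabs_mult, Rabs_mult, (Rabs_pos_eq (/ - x)) by (left; apply Rinv_0_lt_compat; lra).
    rewrite Rabs_pos_eq by lra. apply (Rmult_le_reg_r (-x)). lra. rewrite Rmult_assoc, Rinv_l by lra. lra. }
  assert (HQ := Q_lower _ Harg).
  set (Lb := th0 * exp (- K * (t' / e)) * (cos 1 * cos 1)).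
  assert (HLb : 0 < Lb) by (unfold Lb; apply Rmult_lt_0_compat; [apply Rmult_lt_0_compat; [lra|apply exp_pos]|apply cos1_pos]).
  assert (HLu : Lb <= resc u e t' x').
  { unfold resc. eapply Rle_trans; [|exact Hlow]. unfold Lb. fold K.
    apply Rmult_le_compat_l; auto. apply Rmult_le_pos. lra. left; apply exp_pos. }
  eapply Rbar_le_lt_trans. apply (weps_upper u e t' x' Lb); auto. lra. simpl.
  assert (Heq : - e * ln Lb = - e * ln P + K * t').
  { unfold Lb, P. rewrite (Rmult_comm th0 (exp _)), Rmult_assoc, ln_mult, ln_exp. field. lra.
    apply exp_pos. apply Rmult_lt_0_compat; auto. apply cos1_pos. }
  rewrite Heq.
  assert (K * t' < k / 2).
  { apply Rlt_le_trans with (K * del). apply Rmult_lt_compat_l; lra.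
    apply Rle_trans with (K * (k / (2 * K))). apply Rmult_le_compat_l; lra. replace (K * (k / (2 * K))) with (k / 2) by (field; lra). lra. }
  assert (- e * ln P <= e * Rabs (ln P)) by (unfold Rabs; destruct Rcase_abs; nra).
  assert (e * Rabs (ln P) < k / 2).
  { pose proof (Rabs_pos (ln P)). apply Rle_lt_trans with (del * Rabs (ln P)). apply Rmult_le_compat_r; lra.
    apply Rle_lt_trans with (k / (2 * (Rabs (ln P) + 1)) * Rabs (ln P)). apply Rmult_le_compat_r; lra.
    replace (k / (2 * (Rabs (ln P) + 1)) * Rabs (ln P)) with (k / 2 * (Rabs (ln P) / (Rabs (ln P) + 1))) by (field; lra).
    assert (Rabs (ln P) / (Rabs (ln P) + 1) < 1). { apply (Rmult_lt_reg_r (Rabs (ln P) + 1)). lra. unfold Rdiv. rewrite Rmult_assoc, Rinv_l by lra. lra. }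
    nra. }
  lra.
Qed.

Lemma ev_w_init_pos x M : 0 < x -> ev_gt (weps u) 0 x M.
Proof.
  intros Hx. destruct (u_upper _ _ _ _ _ _ _ _ Ha Hi Hs) as [C0 [x0 [HC0 Hup]]].
  assert (Hx0 : 0 < x0 \/ x0 <= 0) by lra.
  set (m := Rabs M + 1). assert (Hm : 0 < m) by (unfold m; pose proof (Rabs_pos M); lra).
  set (lam := 4 * m / x). assert (Hlam : 0 < lam) by (unfold lam; apply Rdiv_lt_0_compat; lra).
  set (mu := lam * lam + C0). assert (Hmu : 0 <= mu) by (unfold mu; nra).
  set (A := Rabs x0 + 1). assert (HA : 0 < A) by (unfold A; pose proof (Rabs_pos x0); lra).
  set (del := Rmin (x / 2) (Rmin (m / (2 * lam * A)) (m / (2 * (mu + 1))))).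
  assert (H1 : 0 < m / (2 * lam * A)) by (apply Rdiv_lt_0_compat; nra).
  assert (H2 : 0 < m / (2 * (mu + 1))) by (apply Rdiv_lt_0_compat; lra).
  assert (Hd : 0 < del) by (unfold del; repeat apply Rmin_glb_lt; lra).
  assert (Hd1 : del <= x / 2) by apply Rmin_l.
  assert (Hd2 : del <= m / (2 * lam * A)) by (eapply Rle_trans; [apply Rmin_r| apply Rmin_l]).
  assert (Hd3 : del <= m / (2 * (mu + 1))) by (eapply Rle_trans; [apply Rmin_r| apply Rmin_r]).
  exists del. split; auto.
  intros e t' x' [He [Ht' [Htt Hxx]]]. rewrite Rminus_0_r in Htt. rewrite Rabs_pos_eq in Htt by lra.
  assert (Hx' : x / 2 < x') by (revert Hxx; unfold Rabs; destruct Rcase_abs; lra).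
  specialize (Hup lam Hlam (t' / e) (x' / e) ltac:(apply Rdiv_le_0_compat'; lra)).
  eapply Rbar_lt_le_trans; [|apply (weps_lower u e t' x' _ (proj1 He) (exp_pos _) Hup)]. simpl.
  rewrite ln_exp. fold mu.
  replace (- e * (lam * x0 + mu * (t' / e) + - lam * (x' / e))) with (lam * x' - e * lam * x0 - mu * t') by (field; lra).
  assert (lam * x' > 2 * m). { apply Rlt_gt. apply Rle_lt_trans with (lam * (x / 2)). right. unfold lam. field. lra. apply Rmult_lt_compat_l; lra. }
  assert (e * lam * x0 < m / 2).
  { apply Rle_lt_trans with (e * lam * A). assert (x0 <= A) by (unfold A; unfold Rabs; destruct Rcase_abs; lra). apply Rmult_le_compat_l; [|auto]. apply Rmult_le_pos; lra.
    apply Rlt_le_trans with (m / (2 * lam * A) * lam * A). apply Rmult_lt_compat_r; [auto|]. apply Rmult_lt_compat_r; lra. right. field. lra. }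
  assert (mu * t' < m / 2).
  { apply Rle_lt_trans with ((mu + 1) * t'). nra. apply Rlt_le_trans with ((mu + 1) * (m / (2 * (mu + 1)))). apply Rmult_lt_compat_l; lra. right. field. lra. }
  assert (M < m) by (unfold m; unfold Rabs; destruct Rcase_abs; lra).
  lra.
Qed.

Lemma ev_w_bounded t0 x0 : 0 < t0 -> exists Mb, ev_lt (weps u) t0 x0 Mb.
Proof.
  intros Ht0. destruct (u_lower _ _ _ _ _ _ _ _ Ha Hi Hs) as [C1 [th0 [Hth [HC1 Hlow]]]].
  set (P := th0 * (cos 1 * cos 1)). assert (HP : 0 < P) by (unfold P; pose proof cos1_pos; nra).
  set (c := (x0 + 2) / t0).
  set (K := C1 + 2 + c * c). assert (HK : 0 < K) by (unfold K; nra).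
  exists (Rabs (ln P) + K * (t0 + 1) + 1).
  set (del := Rmin 1 (1 / (2 * (Rabs c + 1)))).
  assert (Hc : 0 < 1 / (2 * (Rabs c + 1))) by (apply Rdiv_lt_0_compat; pose proof (Rabs_pos c); lra).
  assert (Hd : 0 < del) by (unfold del; apply Rmin_glb_lt; lra).
  assert (Hd1 : del <= 1) by apply Rmin_l.
  assert (Hd2 : del <= 1 / (2 * (Rabs c + 1))) by apply Rmin_r.
  exists del. split; auto.
  intros e t' x' [He [Ht' [Htt Hxx]]].
  specialize (Hlow e (-2 / e) c ltac:(lra) ltac:(right; field; lra) (t' / e) (x' / e) ltac:(apply Rdiv_le_0_compat'; lra)).
  assert (Harg : Rabs (e * (x' / e - -2 / e - c * (t' / e))) <= 1).
  { replace (e * (x' / e - -2 / e - c * (t' / e))) with ((x' - x0) - c * (t' - t0)) by (unfold c; field; lra).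
    eapply Rle_trans. apply Rabs_triang. rewrite Rabs_Ropp, Rabs_mult.
    assert (Rabs c * Rabs (t' - t0) <= Rabs c * del) by (apply Rmult_le_compat_l; [apply Rabs_pos|lra]).
    assert ((Rabs c + 1) * del <= 1/2).
    { apply Rle_trans with ((Rabs c + 1) * (1 / (2 * (Rabs c + 1)))). apply Rmult_le_compat_l; [pose proof (Rabs_pos c); lra| lra].
      right. field. pose proof (Rabs_pos c); lra. }
    nra. }
  assert (HQ := Q_lower _ Harg).
  set (Lb := th0 * exp (- K * (t' / e)) * (cos 1 * cos 1)).
  assert (HLb : 0 < Lb) by (unfold Lb; apply Rmult_lt_0_compat; [apply Rmult_lt_0_compat; [lra|apply exp_pos]|apply cos1_pos]).
  assert (HLu : Lb <= resc u e t' x').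
  { unfold resc. eapply Rle_trans; [|exact Hlow]. unfold Lb. fold K.
    apply Rmult_le_compat_l; auto. apply Rmult_le_pos. lra. left; apply exp_pos. }
  eapply Rbar_le_lt_trans. apply (weps_upper u e t' x' Lb); auto. lra. simpl.
  assert (Heq : - e * ln Lb = - e * ln P + K * t').
  { unfold Lb, P. rewrite (Rmult_comm th0 (exp _)), Rmult_assoc, ln_mult, ln_exp. field. lra.
    apply exp_pos. apply Rmult_lt_0_compat; auto. apply cos1_pos. }
  rewrite Heq.
  assert (t' < t0 + 1) by (revert Htt; unfold Rabs; destruct Rcase_abs; lra).
  assert (- e * ln P <= Rabs (ln P)) by (unfold Rabs; destruct Rcase_abs; nra).
  nra.
Qed.
End Est.

Lemma near_shift d t0 x0 t x e t' x' : Rabs (t - t0) < d/2 -> Rabs (x - x0) < d/2 ->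
  near (d/2) t x e t' x' -> near d t0 x0 e t' x'.
Proof.
  intros H1 H2 [He [Ht [Htt Hxx]]]. unfold near. revert H1 H2 Htt Hxx.
  unfold Rabs. repeat destruct Rcase_abs; intros; repeat split; lra.
Qed.

Lemma usc_of_limsup (f : R -> R -> R -> Rbar) (w : R -> R -> Rbar) :
  (forall t x, 0 <= t -> hr_limsup f t x (w t x)) -> usc_on_closed_half w.
Proof.
  intros Hw t0 x0 Ht0 M HM.
  assert (HM' : exists M', M' < M /\ Rbar_lt (w t0 x0) (Finite M')).
  { destruct (w t0 x0) as [l| |]; simpl in *; try tauto.
    exists ((l + M)/2). split; lra. exists (M - 1). split; [lra|exact I]. }
  destruct HM' as [M' [HM1 HM2]].
  destruct (limsup_ev _ _ _ _ _ (Hw t0 x0 Ht0) HM2) as [d [Hd H]].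
  exists (d/2). split. lra. intros t x Ht Htt Hxx.
  assert (Hle : Rbar_le (w t x) (Finite M')).
  { apply (limsup_le f t x _ M' Ht (Hw t x Ht)). exists (d/2). split. lra.
    intros e t' x' Hn. apply H. eapply near_shift; eauto. }
  eapply Rbar_le_lt_trans. exact Hle. simpl. lra.
Qed.

Lemma lsc_of_liminf (f : R -> R -> R -> Rbar) (w : R -> R -> Rbar) :
  (forall t x, 0 <= t -> hr_liminf f t x (w t x)) -> lsc_on_closed_half w.
Proof.
  intros Hw t0 x0 Ht0 M HM.
  assert (HM' : exists M', M < M' /\ Rbar_lt (Finite M') (w t0 x0)).
  { destruct (w t0 x0) as [l| |]; simpl in *; try tauto.
    exists ((l + M)/2). split; lra. exists (M + 1). split; [lra|exact I]. }
  destruct HM' as [M' [HM1 HM2]].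
  destruct (liminf_ev _ _ _ _ _ (Hw t0 x0 Ht0) HM2) as [d [Hd H]].
  exists (d/2). split. lra. intros t x Ht Htt Hxx.
  assert (Hle : Rbar_le (Finite M') (w t x)).
  { apply (liminf_ge f t x _ M' Ht (Hw t x Ht)). exists (d/2). split. lra.
    intros e t' x' Hn. apply H. eapply near_shift; eauto. }
  eapply Rbar_lt_le_trans; [|exact Hle]. simpl. lra.
Qed.

Lemma zero_of_bounds L : (forall k, 0 < k -> Rbar_le L (Finite k)) -> (forall k, 0 < k -> Rbar_le (Finite (-k)) L) -> L = Finite 0.
Proof.
  intros H1 H2. destruct L as [l| |].
  - f_equal. destruct (Rtotal_order l 0) as [Hl|[Hl|Hl]]; auto.
    + specialize (H2 (-l/2) ltac:(lra)). simpl in H2. lra.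
    + specialize (H1 (l/2) ltac:(lra)). simpl in H1. lra.
  - specialize (H1 1 ltac:(lra)). simpl in H1. tauto.
  - specialize (H2 1 ltac:(lra)). simpl in H2. tauto.
Qed.

Lemma pinf_of_bounds L : (forall M, Rbar_le (Finite M) L) -> L = p_infty.
Proof.
  intros H. destruct L as [l| |]; auto.
  - specialize (H (l + 1)). simpl in H. lra.
  - specialize (H 0). simpl in H. tauto.
Qed.

Lemma init_values d r a b u0 v0 u v wstar wlow : 0 < a < 1 -> H_inf u0 v0 -> is_solution_11 d r a b u0 v0 u v ->
  (forall t x, 0 <= t -> hr_limsup (weps u) t x (wstar t x)) ->
  (forall t x, 0 <= t -> hr_liminf (weps u) t x (wlow t x)) ->
  (forall x, x < 0 -> wstar 0 x = Finite 0 /\ wlow 0 x = Finite 0) /\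
  (forall x, 0 < x -> wlow 0 x = p_infty).
Proof.
  intros Ha Hi Hs Hws Hwl. split.
  - intros x Hx. split; apply zero_of_bounds; intros k Hk.
    + apply (limsup_le (weps u) 0 x). lra. apply Hws; lra. eapply ev_w_init_neg; eauto.
    + apply (limsup_ge (weps u) 0 x). lra. apply Hws; lra. eapply ev_w_lower; eauto.
    + apply (liminf_le (weps u) 0 x). lra. apply Hwl; lra. eapply ev_w_init_neg; eauto.
    + apply (liminf_ge (weps u) 0 x). lra. apply Hwl; lra. eapply ev_w_lower; eauto.
  - intros x Hx. apply pinf_of_bounds. intro M.
    apply (liminf_ge (weps u) 0 x). lra. apply Hwl; lra. eapply ev_w_init_pos; eauto.
Qed.

Lemma exists_limsup (g : R -> R -> R -> R) t0 x0 B : 0 <= t0 ->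
  (forall e t x, 0 < e -> 0 <= t -> Rabs (g e t x) <= B) ->
  exists L, hr_limsup (fun e t x => Finite (g e t x)) t0 x0 (Finite L).
Proof.
  intros Ht0 Hb.
  set (E := fun M => forall dl, 0 < dl -> exists e t' x', near dl t0 x0 e t' x' /\ M < g e t' x').
  assert (Hpt : forall dl, 0 < dl -> near dl t0 x0 (dl/2) t0 x0).
  { intros dl Hdl. unfold near. rewrite !Rminus_diag, Rabs_R0. repeat split; lra. }
  assert (HE : E (-B - 1)).
  { intros dl Hdl. exists (dl/2), t0, x0. split. auto. specialize (Hb (dl/2) t0 x0 ltac:(lra) Ht0).
    revert Hb. unfold Rabs. destruct Rcase_abs; lra. }
  assert (Hbd : bound E).
  { exists B. intros M HM. destruct (HM 1 ltac:(lra)) as [e [t' [x' [[He [Ht' _]] HMg]]]].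
    specialize (Hb e t' x' ltac:(lra) Ht'). revert Hb. unfold Rabs. destruct Rcase_abs; lra. }
  destruct (completeness E Hbd (ex_intro _ _ HE)) as [L [HL1 HL2]].
  exists L. split.
  - intros M HM. simpl in HM. set (m := (L + M)/2).
    assert (Hm : ~ E m). { intro Hm. specialize (HL1 m Hm). unfold m in HL1. lra. }
    unfold E in Hm. apply not_all_ex_not in Hm. destruct Hm as [dl Hdl].
    apply imply_to_and in Hdl. destruct Hdl as [Hdl Hn].
    exists dl. split; auto. intros e t' x' He Ht' Htt Hxx. simpl.
    destruct (Rle_or_lt (g e t' x') m) as [|Hlt]. unfold m in *; lra.
    exfalso. apply Hn. exists e, t', x'. split; auto. repeat split; tauto.
  - intros M HM dl Hdl. simpl in HM.
    assert (Hex : exists M', E M' /\ M < M').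
    { apply NNPP. intro Hn. assert (HMub : is_upper_bound E M).
      { intros M' HM'. destruct (Rle_or_lt M' M); auto. exfalso. apply Hn. exists M'. auto. }
      specialize (HL2 M HMub). lra. }
    destruct Hex as [M' [HM' HMM']]. destruct (HM' dl Hdl) as [e [t' [x' [[He [Ht' [Htt Hxx]]] Hg]]]].
    exists e, t', x'. repeat split; try tauto. simpl. lra.
Qed.

Lemma exists_liminf (g : R -> R -> R -> R) t0 x0 B : 0 <= t0 ->
  (forall e t x, 0 < e -> 0 <= t -> Rabs (g e t x) <= B) ->
  exists l, hr_liminf (fun e t x => Finite (g e t x)) t0 x0 (Finite l).
Proof.
  intros Ht0 Hb. destruct (exists_limsup (fun e t x => - g e t x) t0 x0 B Ht0) as [L [H1 H2]].
  { intros. rewrite Rabs_Ropp. auto. }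
  exists (-L). split.
  - intros M HM. simpl in HM. destruct (H1 (-M)) as [dl [Hdl H]]. simpl; lra.
    exists dl. split; [exact Hdl|]. intros e t' x' H0 H3 H4 H5. specialize (H e t' x' H0 H3 H4 H5). simpl in *. lra.
  - intros M HM dl Hdl. simpl in HM. destruct (H2 (-M) ltac:(simpl; lra) dl Hdl) as [e [t' [x' [A [B' [C [D E]]]]]]].
    exists e, t', x'. split; [tauto|]. split; [tauto|]. split; [tauto|]. split; [tauto|]. simpl in *. lra.
Qed.

Lemma v_ev d r a b u0 v0 u v c1 ct1 t0 x0 : is_solution_11 d r a b u0 v0 u v -> cond31 v c1 ct1 -> 0 < t0 ->
  forall eta, 0 < eta ->
  ev_lt (fun e t x => Finite (resc v e t x)) t0 x0 (chi_le c1 t0 x0 + eta) /\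
  ev_gt (fun e t x => Finite (resc v e t x)) t0 x0 (chi_between ct1 c1 t0 x0 - eta).
Proof.
  intros Hs Hc Ht0 eta Heta.
  destruct (sol_facts _ _ _ _ _ _ _ _ Hs) as [B [_ [_ [_ [HB [Hb _]]]]]].
  assert (Hbv : forall e t x, 0 < e -> 0 <= t -> Rabs (resc v e t x) <= B).
  { intros e t x He Ht. unfold resc. apply Hb. apply Rdiv_le_0_compat'; lra. }
  destruct (exists_limsup (resc v) t0 x0 B ltac:(lra) Hbv) as [L HL].
  destruct (exists_liminf (resc v) t0 x0 B ltac:(lra) Hbv) as [l Hl].
  destruct (Hc t0 x0 Ht0 _ _ Hl HL) as [C1 [_ C3]]. simpl in C1, C3.
  split.
  - apply (limsup_ev _ _ _ _ _ HL). simpl. lra.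
  - apply (liminf_ev _ _ _ _ _ Hl). simpl. lra.
Qed.

Lemma mvt_bound f f' a b p eta :
  (forall z, Rmin a b <= z <= Rmax a b -> derivable_pt_lim f z (f' z) /\ Rabs (f' z - p) <= eta) ->
  Rabs (f b - f a - p * (b - a)) <= eta * Rabs (b - a).
Proof.
  intros H. destruct (Rtotal_order a b) as [Hab|[Hab|Hab]].
  - destruct (MVT_cor2 f f' a b Hab) as [c [Hc1 Hc2]].
    { intros z Hz. apply H. rewrite Rmin_left, Rmax_right by lra. auto. }
    rewrite Hc1. replace (f' c * (b - a) - p * (b - a)) with ((f' c - p) * (b - a)) by ring.
    rewrite Rabs_mult. apply Rmult_le_compat_r. apply Rabs_pos. apply H. rewrite Rmin_left, Rmax_right by lra. lra.
  - subst. rewrite !Rminus_diag, Rmult_0_r, Rminus_0_r, Rabs_R0. lra.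
  - destruct (MVT_cor2 f f' b a Hab) as [c [Hc1 Hc2]].
    { intros z Hz. apply H. rewrite Rmin_right, Rmax_left by lra. auto. }
    replace (f b - f a - p * (b - a)) with (- ((f a - f b) - p * (a - b))) by ring.
    rewrite Rabs_Ropp, Hc1. replace (f' c * (a - b) - p * (a - b)) with ((f' c - p) * (a - b)) by ring.
    rewrite Rabs_mult, <- (Rabs_Ropp (b - a)). replace (- (b - a)) with (a - b) by ring.
    apply Rmult_le_compat_r. apply Rabs_pos. apply H. rewrite Rmin_right, Rmax_left by lra. lra.
Qed.

Lemma between_close a b z : Rmin a b <= z <= Rmax a b -> Rabs (z - a) <= Rabs (b - a).
Proof. unfold Rmin, Rmax. destruct Rle_dec; intros; unfold Rabs; repeat destruct Rcase_abs; lra. Qed.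

Lemma lin_C1 phi phit phix t0 x0 : C1_test phi phit phix -> 0 < t0 -> forall eta, 0 < eta ->
  exists r, 0 < r /\ r < t0 /\ forall t x, Rabs (t - t0) < r -> Rabs (x - x0) < r ->
    Rabs (phi t x - phi t0 x0 - phit t0 x0 * (t - t0) - phix t0 x0 * (x - x0)) <= eta * (Rabs (t - t0) + Rabs (x - x0)).
Proof.
  intros [_ [Hpt [Hpx Hder]]] Ht0 eta Heta.
  destruct (Hpt t0 x0 Ht0 eta Heta) as [d1 [Hd1 H1]].
  destruct (Hpx t0 x0 Ht0 eta Heta) as [d2 [Hd2 H2]].
  set (r := Rmin (Rmin d1 d2) (t0/2)).
  assert (Hr : 0 < r) by (unfold r; repeat apply Rmin_glb_lt; lra).
  assert (Hr1 : r <= d1) by (unfold r; eapply Rle_trans; [apply Rmin_l| apply Rmin_l]).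
  assert (Hr2 : r <= d2) by (unfold r; eapply Rle_trans; [apply Rmin_l| apply Rmin_r]).
  assert (Hr3 : r <= t0/2) by (unfold r; apply Rmin_r).
  exists r. split. exact Hr. split. lra. intros t x Ht Hx.
  assert (A : Rabs (phi t x - phi t0 x - phit t0 x0 * (t - t0)) <= eta * Rabs (t - t0)).
  { apply (mvt_bound (fun s => phi s x) (fun s => phit s x)). intros z Hz.
    pose proof (between_close _ _ _ Hz).
    assert (0 < z) by (revert H Ht; unfold Rabs; repeat destruct Rcase_abs; lra).
    split. apply (proj1 (Hder z x H0)). left. apply H1. exact H0. lra. lra. }
  assert (B : Rabs (phi t0 x - phi t0 x0 - phix t0 x0 * (x - x0)) <= eta * Rabs (x - x0)).
  { apply (mvt_bound (fun s => phi t0 s) (fun s => phix t0 s)). intros z Hz.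
    pose proof (between_close _ _ _ Hz).
    split. apply (proj2 (Hder t0 z Ht0)). left. apply H2. exact Ht0. rewrite Rminus_diag, Rabs_R0; lra. lra. }
  replace (phi t x - phi t0 x0 - phit t0 x0 * (t - t0) - phix t0 x0 * (x - x0)) with
    ((phi t x - phi t0 x - phit t0 x0 * (t - t0)) + (phi t0 x - phi t0 x0 - phix t0 x0 * (x - x0))) by ring.
  eapply Rle_trans. apply Rabs_triang. lra.
Qed.

Lemma dl_div f1 f2 x l1 l2 : derivable_pt_lim f1 x l1 -> derivable_pt_lim f2 x l2 -> f2 x <> 0 ->
  derivable_pt_lim (fun y => f1 y / f2 y) x ((l1 * f2 x - l2 * f1 x) / (f2 x * f2 x)).
Proof. intros. apply derivable_pt_lim_div; auto. Qed.

Lemma dl_sc e x : 0 < e -> derivable_pt_lim (fun y => y / e) x (/ e).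
Proof. intro He. apply (dl_eq _ _ (/e * 1)). ring. apply (dl_ext (fun y => / e * y)). intro; unfold Rdiv; ring. apply dl_scal. apply dl_id. Qed.

Lemma core (a e s : R) (u v ut ux uxx g : R -> R -> R) gt (gx : R -> R) gxx ts xs rho :
  s * s = 1 -> 0 < e -> 0 < rho ->
  (forall t x, 0 < t -> derivable_pt_lim (fun s => u s x) t (ut t x) /\
     derivable_pt_lim (fun y => u t y) x (ux t x) /\ derivable_pt_lim (fun y => ux t y) x (uxx t x)) ->
  (forall t x, 0 < t -> ut t x - uxx t x = u t x * (1 - u t x - a * v t x)) ->
  (forall t x, Rabs (t - ts) < rho -> Rabs (x - xs) < rho -> 0 < t /\ 0 < u (t/e) (x/e)) ->
  (forall t x, Rabs (t - ts) < rho -> Rabs (x - xs) < rho ->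
     s * (- e * ln (u (t/e) (x/e)) - g t x) <= s * (- e * ln (u (ts/e) (xs/e)) - g ts xs)) ->
  derivable_pt_lim (fun t => g t xs) ts gt ->
  (forall y, Rabs (y - xs) < rho -> derivable_pt_lim (fun y => g ts y) y (gx y)) ->
  derivable_pt_lim gx xs gxx ->
  s * (gt + gx xs * gx xs + 1 - u (ts/e) (xs/e) - a * v (ts/e) (xs/e) - e * gxx) <= 0.
Proof.
  intros Hs He Hr Hder Heq Hpos Hmax Hgt Hgx Hgxx.
  assert (Hc : Rabs (ts - ts) < rho /\ Rabs (xs - xs) < rho) by (rewrite !Rminus_diag, Rabs_R0; lra).
  destruct (Hpos ts xs (proj1 Hc) (proj2 Hc)) as [Hts HU].
  assert (Htse : 0 < ts / e) by (apply Rdiv_lt_0_compat; lra).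
  set (U := u (ts/e) (xs/e)). fold U in HU.
  destruct (Hder (ts/e) (xs/e) Htse) as [D1 [D2 D3]].
  assert (HF1 : derivable_pt_lim (fun t => s * (- e * ln (u (t/e) (xs/e)) - g t xs)) ts
     (s * (- e * (/ U * (ut (ts/e) (xs/e) * / e)) - gt))).
  { apply dl_scal. apply dl_minus; [|exact Hgt]. apply dl_scal.
    apply (dl_comp (fun t => u (t/e) (xs/e)) ln). apply (dl_comp (fun t => t/e) (fun t => u t (xs/e))).
    apply dl_sc; auto. exact D1. apply derivable_pt_lim_ln. exact HU. }
  assert (E1 := max_deriv0 _ _ _ rho Hr (fun t Ht => Hmax t xs Ht (proj2 Hc)) HF1).
  set (F2' := fun y => s * (- (ux (ts/e) (y/e) / u (ts/e) (y/e)) - gx y)).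
  assert (HF2 : forall y, Rabs (y - xs) < rho -> derivable_pt_lim (fun x => s * (- e * ln (u (ts/e) (x/e)) - g ts x)) y (F2' y)).
  { intros y Hy. destruct (Hpos ts y (proj1 Hc) Hy) as [_ HUy].
    destruct (Hder (ts/e) (y/e) Htse) as [_ [Dy _]].
    apply (dl_eq _ _ (s * (- e * (/ u (ts/e) (y/e) * (ux (ts/e) (y/e) * / e)) - gx y))).
    unfold F2'. field. split; lra.
    apply dl_scal. apply dl_minus; [|apply Hgx; auto]. apply dl_scal.
    apply (dl_comp (fun x => u (ts/e) (x/e)) ln). apply (dl_comp (fun x => x/e) (fun x => u (ts/e) x)).
    apply dl_sc; auto. exact Dy. apply derivable_pt_lim_ln. exact HUy. }
  assert (HF2' : derivable_pt_lim F2' xs (s * (- ((uxx (ts/e) (xs/e) * / e * U - ux (ts/e) (xs/e) * / e * ux (ts/e) (xs/e)) / (U * U)) - gxx))).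
  { unfold F2'. apply dl_scal. apply dl_minus; [|exact Hgxx]. apply dl_opp.
    apply (dl_div (fun y => ux (ts/e) (y/e)) (fun y => u (ts/e) (y/e))).
    apply (dl_comp (fun x => x/e) (fun x => ux (ts/e) x)). apply dl_sc; auto. exact D3.
    apply (dl_comp (fun x => x/e) (fun x => u (ts/e) x)). apply dl_sc; auto. exact D2.
    fold U. lra. }
  assert (E2 := max_deriv0 _ _ _ rho Hr (fun y Hy => Hmax ts y (proj1 Hc) Hy) (HF2 xs (proj2 Hc))).
  assert (E3 := max_deriv2 _ F2' xs _ rho Hr (fun y Hy => Hmax ts y (proj1 Hc) Hy) HF2 HF2').
  unfold F2' in E2. fold U in E2.
  specialize (Heq (ts/e) (xs/e) Htse). fold U in Heq.
  set (A := ut (ts/e) (xs/e)) in *. set (X := ux (ts/e) (xs/e)) in *. set (Y := uxx (ts/e) (xs/e)) in *.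
  set (V := v (ts/e) (xs/e)) in *.
  assert (Hs0 : s <> 0) by (intro; subst; lra).
  assert (HA : A = - gt * U).
  { assert (- e * (/ U * (A * / e)) - gt = 0).
    { destruct (Rmult_integral _ _ E1); [contradiction|auto]. }
    assert (- e * (/ U * (A * / e)) = - (A / U)) by (field; lra).
    assert (A / U = - gt) by lra. apply (Rmult_eq_reg_r (/ U)). rewrite <- H1. field. lra. apply Rinv_neq_0_compat. lra. }
  assert (HX : X = - gx xs * U).
  { assert (- (X / U) - gx xs = 0). { destruct (Rmult_integral _ _ E2); [contradiction|auto]. }
    assert (X / U = - gx xs) by lra. apply (Rmult_eq_reg_r (/ U)). rewrite <- H0. field. lra. apply Rinv_neq_0_compat. lra. }
  assert (HY : Y = A - U * (1 - U - a * V)) by lra.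
  assert (Hk : - ((Y * / e * U - X * / e * X) / (U * U)) = (gt + gx xs * gx xs + 1 - U - a * V) / e).
  { rewrite HY, HA, HX. field. lra. }
  rewrite Hk in E3.
  assert (Hm : s * (gt + gx xs * gx xs + 1 - U - a * V - e * gxx) = e * (s * ((gt + gx xs * gx xs + 1 - U - a * V) / e - gxx))) by (field; lra).
  rewrite Hm. assert (0 <= e * - (s * ((gt + gx xs * gx xs + 1 - U - a * V) / e - gxx))) by (apply Rmult_le_pos; lra). lra.
Qed.

Definition S (sg s : R) := sqrt (sg * sg + s * s).

Section SProps.
Variable sg : R.
Hypothesis Hsg : 0 < sg.

Lemma S_pos s : 0 < S sg s.
Proof. unfold S. apply sqrt_lt_R0. nra. Qed.
Lemma S_sq s : S sg s * S sg s = sg * sg + s * s.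
Proof. unfold S. apply sqrt_sqrt. nra. Qed.
Lemma S_ge_abs s : Rabs s <= S sg s.
Proof.
  pose proof (S_pos s). pose proof (S_sq s).
  assert (Rabs s * Rabs s = s * s) by (rewrite <- Rabs_mult; apply Rabs_pos_eq; nra).
  pose proof (Rabs_pos s). nra.
Qed.
Lemma S_ge_sg s : sg <= S sg s.
Proof. pose proof (S_pos s). pose proof (S_sq s). nra. Qed.
Lemma S_le s : S sg s <= Rabs s + sg.
Proof.
  pose proof (S_pos s). pose proof (S_sq s).
  assert (Rabs s * Rabs s = s * s) by (rewrite <- Rabs_mult; apply Rabs_pos_eq; nra).
  pose proof (Rabs_pos s). nra.
Qed.
Lemma S_nonneg s : 0 <= S sg s.
Proof. left; apply S_pos. Qed.

Lemma dl_S s : derivable_pt_lim (S sg) s (s / S sg s).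
Proof.
  unfold S. apply (dl_eq _ _ (/ (2 * sqrt (sg * sg + s * s)) * (0 + (1 * s + s * 1)))).
  field. apply Rgt_not_eq. apply sqrt_lt_R0. nra.
  apply (dl_comp (fun y => sg * sg + y * y) sqrt). apply dl_plus. apply dl_const.
  apply (dl_mult (fun y => y) (fun y => y)); apply dl_id. apply derivable_pt_lim_sqrt. nra.
Qed.

Lemma dl_dS s : derivable_pt_lim (fun y => y / S sg y) s (sg * sg / (S sg s * S sg s * S sg s)).
Proof.
  pose proof (S_pos s). pose proof (S_sq s).
  eapply dl_eq; [|apply (dl_div (fun y => y) (S sg)); [apply dl_id| apply dl_S| lra]].
  replace (sg * sg) with (S sg s * S sg s - s * s) by lra. field. lra.
Qed.

Lemma dS_bound s : Rabs (s / S sg s) <= 1.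
Proof.
  pose proof (S_pos s). pose proof (S_ge_abs s). unfold Rdiv. rewrite Rabs_mult, (Rabs_pos_eq (/ _)).
  apply (Rmult_le_reg_r (S sg s)); auto. rewrite Rmult_assoc, Rinv_l by lra. lra.
  left; apply Rinv_0_lt_compat; auto.
Qed.

Lemma ddS_bound s : 0 <= sg * sg / (S sg s * S sg s * S sg s) <= 1 / sg.
Proof.
  pose proof (S_pos s). pose proof (S_ge_sg s).
  assert (0 < S sg s * S sg s * S sg s) by (repeat apply Rmult_lt_0_compat; auto).
  split. apply Rdiv_le_0_compat'; nra.
  assert (sg * sg * sg <= S sg s * S sg s * S sg s).
  { assert (sg * sg <= S sg s * S sg s) by nra. apply Rmult_le_compat; nra. }
  apply (Rmult_le_reg_r (S sg s * S sg s * S sg s)); auto.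
  replace (sg * sg / (S sg s * S sg s * S sg s) * (S sg s * S sg s * S sg s)) with (sg * sg) by (field; lra).
  replace (1 / sg * (S sg s * S sg s * S sg s)) with ((S sg s * S sg s * S sg s) / sg) by (field; lra).
  apply (Rmult_le_reg_r sg); auto. replace ((S sg s * S sg s * S sg s) / sg * sg) with (S sg s * S sg s * S sg s) by (field; lra). lra.
Qed.

Lemma S_cont s : continuity_pt (S sg) s.
Proof. eapply dl_cont. apply dl_S. Qed.
End SProps.

Lemma cont_box_comp a1 b1 a2 b2 (h : R -> R) f : (forall z, continuity_pt h z) ->
  cont_box a1 b1 a2 b2 f -> cont_box a1 b1 a2 b2 (fun t x => h (f t x)).
Proof.
  intros Hh Hf t x Hb eps He. destruct (cont_pt_elim h _ (Hh (f t x)) eps He) as [d [Hd H2]].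
  destruct (Hf t x Hb d Hd) as [d' [Hd' H3]]. exists d'. split; [auto|]. intros. apply H2. apply H3; auto.
Qed.

Lemma cont_box_resc a1 b1 a2 b2 (u : R -> R -> R) e : 0 < e -> 0 <= a1 -> cont2_on closed_half u ->
  cont_box a1 b1 a2 b2 (fun t x => u (t / e) (x / e)).
Proof.
  intros He Ha1 Hu t x [Ht Hx] eps Heps.
  destruct (Hu (t/e) (x/e) ltac:(unfold closed_half; apply Rdiv_le_0_compat'; lra) eps Heps) as [d [Hd H]].
  exists (d * e). split. nra. intros t' x' [Ht' Hx'] Htt Hxx. apply H.
  unfold closed_half. apply Rdiv_le_0_compat'; lra.
  replace (t'/e - t/e) with ((t' - t) / e) by (field; lra). unfold Rdiv. rewrite Rabs_mult, (Rabs_pos_eq (/e)).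
  apply (Rmult_lt_reg_r e); auto. rewrite Rmult_assoc, Rinv_l by lra. lra. left; apply Rinv_0_lt_compat; auto.
  replace (x'/e - x/e) with ((x' - x) / e) by (field; lra). unfold Rdiv. rewrite Rabs_mult, (Rabs_pos_eq (/e)).
  apply (Rmult_lt_reg_r e); auto. rewrite Rmult_assoc, Rinv_l by lra. lra. left; apply Rinv_0_lt_compat; auto.
Qed.

Lemma unif_limsup (f : R -> R -> R -> Rbar) (w : R -> R -> Rbar) (h : R -> R -> R) t0 x0 r Lh kap :
  0 < r -> r < t0 -> 0 <= Lh -> 0 < kap ->
  (forall t x, box (t0 - r) (t0 + r) (x0 - r) (x0 + r) t x -> hr_limsup f t x (w t x)) ->
  (forall t x, box (t0 - r) (t0 + r) (x0 - r) (x0 + r) t x -> Rbar_le (w t x) (Finite (h t x))) ->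
  (forall t x t' x', h t x <= h t' x' + Lh * (Rabs (t - t') + Rabs (x - x'))) ->
  exists d, 0 < d /\ forall e t x, 0 < e < d -> box (t0 - r) (t0 + r) (x0 - r) (x0 + r) t x ->
    Rbar_lt (f e t x) (Finite (h t x + kap)).
Proof.
  intros Hr Hrt HL Hk Hls Hw Hh.
  assert (Hg : forall t x, exists dl, 0 < dl /\ (box (t0 - r) (t0 + r) (x0 - r) (x0 + r) t x ->
     forall e t' x', near dl t x e t' x' -> Rbar_lt (f e t' x') (Finite (h t x + kap/2)))).
  { intros t x. destruct (classic (box (t0 - r) (t0 + r) (x0 - r) (x0 + r) t x)) as [Hb|Hb]; [|exists 1; split; [lra|tauto]].
    destruct (limsup_ev f t x (w t x) (h t x + kap/2) (Hls t x Hb)) as [dl [Hdl H]].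
    eapply Rbar_le_lt_trans. apply Hw; auto. simpl; lra.
    exists dl. split; auto. }
  destruct (choice2 _ Hg) as [G HG].
  set (c := kap / (4 * (Lh + 1))). assert (Hc : 0 < c) by (unfold c; apply Rdiv_lt_0_compat; lra).
  destruct (cousin2 (t0 - r) (t0 + r) (x0 - r) (x0 + r) (fun t x => Rmin (G t x) c)) as [d [Hd Hd2]].
  { intros t x. apply Rmin_glb_lt; auto. apply HG. }
  exists d. split; auto. intros e t x He [Ht Hx].
  destruct (Hd2 t x Ht Hx) as [ct [cx [Hct [Hcx [H1 [H2 H3]]]]]].
  assert (Hm1 : Rmin (G ct cx) c <= G ct cx) by apply Rmin_l.
  assert (Hm2 : Rmin (G ct cx) c <= c) by apply Rmin_r.
  destruct (HG ct cx) as [_ HG2].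
  specialize (HG2 (conj Hct Hcx) e t x). eapply Rbar_lt_le_trans. apply HG2.
  unfold near. repeat split; lra.
  simpl. specialize (Hh ct cx t x).
  assert (Lh * (Rabs (ct - t) + Rabs (cx - x)) <= Lh * (2 * c)).
  { apply Rmult_le_compat_l; auto. rewrite (Rabs_minus_sym ct), (Rabs_minus_sym cx). lra. }
  assert (Lh * (2 * c) <= kap / 2).
  { unfold c. replace (Lh * (2 * (kap / (4 * (Lh + 1))))) with (kap / 2 * (Lh / (Lh + 1))) by (field; lra).
    assert (Lh / (Lh + 1) <= 1). { apply (Rmult_le_reg_r (Lh + 1)). lra. unfold Rdiv. rewrite Rmult_assoc, Rinv_l by lra. lra. }
    nra. }
  lra.
Qed.

Lemma unif_liminf (f : R -> R -> R -> Rbar) (w : R -> R -> Rbar) (h : R -> R -> R) t0 x0 r Lh kap :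
  0 < r -> r < t0 -> 0 <= Lh -> 0 < kap ->
  (forall t x, box (t0 - r) (t0 + r) (x0 - r) (x0 + r) t x -> hr_liminf f t x (w t x)) ->
  (forall t x, box (t0 - r) (t0 + r) (x0 - r) (x0 + r) t x -> Rbar_le (Finite (h t x)) (w t x)) ->
  (forall t x t' x', h t' x' - Lh * (Rabs (t - t') + Rabs (x - x')) <= h t x) ->
  exists d, 0 < d /\ forall e t x, 0 < e < d -> box (t0 - r) (t0 + r) (x0 - r) (x0 + r) t x ->
    Rbar_lt (Finite (h t x - kap)) (f e t x).
Proof.
  intros Hr Hrt HL Hk Hls Hw Hh.
  assert (Hg : forall t x, exists dl, 0 < dl /\ (box (t0 - r) (t0 + r) (x0 - r) (x0 + r) t x ->
     forall e t' x', near dl t x e t' x' -> Rbar_lt (Finite (h t x - kap/2)) (f e t' x'))).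
  { intros t x. destruct (classic (box (t0 - r) (t0 + r) (x0 - r) (x0 + r) t x)) as [Hb|Hb]; [|exists 1; split; [lra|tauto]].
    destruct (liminf_ev f t x (w t x) (h t x - kap/2) (Hls t x Hb)) as [dl [Hdl H]].
    eapply Rbar_lt_le_trans; [|apply Hw; auto]. simpl; lra.
    exists dl. split; auto. }
  destruct (choice2 _ Hg) as [G HG].
  set (c := kap / (4 * (Lh + 1))). assert (Hc : 0 < c) by (unfold c; apply Rdiv_lt_0_compat; lra).
  destruct (cousin2 (t0 - r) (t0 + r) (x0 - r) (x0 + r) (fun t x => Rmin (G t x) c)) as [d [Hd Hd2]].
  { intros t x. apply Rmin_glb_lt; auto. apply HG. }
  exists d. split; auto. intros e t x He [Ht Hx].
  destruct (Hd2 t x Ht Hx) as [ct [cx [Hct [Hcx [H1 [H2 H3]]]]]].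
  assert (Hm1 : Rmin (G ct cx) c <= G ct cx) by apply Rmin_l.
  assert (Hm2 : Rmin (G ct cx) c <= c) by apply Rmin_r.
  destruct (HG ct cx) as [_ HG2].
  specialize (HG2 (conj Hct Hcx) e t x). eapply Rbar_le_lt_trans; [|apply HG2; unfold near; repeat split; lra].
  simpl. specialize (Hh ct cx t x).
  assert (Lh * (Rabs (ct - t) + Rabs (cx - x)) <= Lh * (2 * c)).
  { apply Rmult_le_compat_l; auto. rewrite (Rabs_minus_sym ct), (Rabs_minus_sym cx). lra. }
  assert (Lh * (2 * c) <= kap / 2).
  { unfold c. replace (Lh * (2 * (kap / (4 * (Lh + 1))))) with (kap / 2 * (Lh / (Lh + 1))) by (field; lra).
    assert (Lh / (Lh + 1) <= 1). { apply (Rmult_le_reg_r (Lh + 1)). lra. unfold Rdiv. rewrite Rmult_assoc, Rinv_l by lra. lra. }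
    nra. }
  lra.
Qed.

Definition gfun (p q c3 sg t0 x0 t x : R) := p * (t - t0) + q * (x - x0) + c3 * (S sg (t - t0) + S sg (x - x0)).

Lemma cont_box_g a1 b1 a2 b2 p q c3 sg t0 x0 : 0 < sg -> cont_box a1 b1 a2 b2 (gfun p q c3 sg t0 x0).
Proof.
  intro Hsg. unfold gfun.
  apply (cont_box_ext _ _ _ _ (fun t x => (p * (t - t0) + c3 * S sg (t - t0)) + (q * (x - x0) + c3 * S sg (x - x0)))).
  intros; ring.
  apply cont_box_add.
  - apply cont_box_t. intro t. eapply dl_cont. apply dl_plus. apply dl_scal. apply dl_minus. apply dl_id. apply dl_const.
    apply dl_scal. apply (dl_comp (fun t => t - t0) (S sg)). apply dl_minus. apply dl_id. apply dl_const. apply dl_S; auto.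
  - apply cont_box_x. intro t. eapply dl_cont. apply dl_plus. apply dl_scal. apply dl_minus. apply dl_id. apply dl_const.
    apply dl_scal. apply (dl_comp (fun t => t - x0) (S sg)). apply dl_minus. apply dl_id. apply dl_const. apply dl_S; auto.
Qed.

Lemma dl_g_t p q c3 sg t0 x0 xs ts : 0 < sg ->
  derivable_pt_lim (fun t => gfun p q c3 sg t0 x0 t xs) ts (p + c3 * ((ts - t0) / S sg (ts - t0))).
Proof.
  intro Hsg. unfold gfun.
  eapply dl_eq; [|apply dl_plus; [apply dl_plus; [apply dl_scal; apply dl_minus; [apply dl_id|apply dl_const]| apply dl_const]|
     apply dl_scal; apply dl_plus; [apply (dl_comp (fun t => t - t0) (S sg)); [apply dl_minus; [apply dl_id|apply dl_const]| apply dl_S; auto]| apply dl_const]]].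
  ring.
Qed.

Lemma dl_g_x p q c3 sg t0 x0 ts y : 0 < sg ->
  derivable_pt_lim (fun x => gfun p q c3 sg t0 x0 ts x) y (q + c3 * ((y - x0) / S sg (y - x0))).
Proof.
  intro Hsg. unfold gfun.
  eapply dl_eq; [|apply dl_plus; [apply dl_plus; [apply dl_const| apply dl_scal; apply dl_minus; [apply dl_id|apply dl_const]]|
     apply dl_scal; apply dl_plus; [apply dl_const| apply (dl_comp (fun t => t - x0) (S sg)); [apply dl_minus; [apply dl_id|apply dl_const]| apply dl_S; auto]]]].
  ring.
Qed.

Lemma dl_g_xx q c3 sg x0 xs : 0 < sg ->
  derivable_pt_lim (fun y => q + c3 * ((y - x0) / S sg (y - x0))) xs (c3 * (sg * sg / (S sg (xs - x0) * S sg (xs - x0) * S sg (xs - x0)))).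
Proof.
  intro Hsg. eapply dl_eq; [|apply dl_plus; [apply dl_const| apply dl_scal; apply (dl_comp (fun y => y - x0) (fun s => s / S sg s)); [apply dl_minus; [apply dl_id|apply dl_const]| apply dl_dS; auto]]].
  ring.
Qed.

Lemma Rabs_triang_inv' a b : Rabs a - Rabs b <= Rabs (a - b).
Proof. unfold Rabs; repeat destruct Rcase_abs; lra. Qed.

Lemma Rbar_le_trans x y z : Rbar_le x y -> Rbar_le y z -> Rbar_le x z.
Proof. destruct x, y, z; simpl; auto; try lra; tauto. Qed.

Lemma sub_main d r a b c1 ct1 u0 v0 u v (wstar : R -> R -> Rbar) phi phit phix t0 x0 W rho :
  0 < a < 1 -> is_solution_11 d r a b u0 v0 u v -> cond31 v c1 ct1 ->
  (forall t x, 0 <= t -> hr_limsup (weps u) t x (wstar t x)) ->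
  C1_test phi phit phix -> 0 < t0 -> 0 < rho ->
  (forall t x, 0 < t -> Rabs (t - t0) < rho -> Rabs (x - x0) < rho ->
     Rbar_le (wstar t x) (Rbar_addr (wstar t0 x0) (phi t x - phi t0 x0))) ->
  wstar t0 x0 = Finite W -> 0 < W ->
  phit t0 x0 + (phix t0 x0 * phix t0 x0 + 1 - a * chi_le c1 t0 x0) <= 0.
Proof.
  intros Ha Hs Hc31 Hws HC1 Ht0 Hrho Htouch HW HW0.
  pose proof Hs as Hs'.
  destruct Hs' as [Hbd [H0 [ut [ux [uxx [vt [vx [vxx [[Hcu [_ [_ [_ Hder]]]] [_ Heq]]]]]]]]]].
  assert (Heq' : forall t x, 0 < t -> ut t x - uxx t x = u t x * (1 - u t x - a * v t x)) by (intros; apply Heq; auto).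
  set (p := phit t0 x0). set (q := phix t0 x0). set (chi := chi_le c1 t0 x0).
  set (P := p + (q * q + 1 - a * chi)).
  destruct (Rle_or_lt P 0) as [HP|HP]; [exact HP|exfalso].
  set (eta := P / (4 * (4 + 6 * Rabs q + a))).
  assert (Hq0 : 0 <= Rabs q) by apply Rabs_pos.
  assert (Heta : 0 < eta) by (unfold eta; apply Rdiv_lt_0_compat; lra).
  assert (Heta2 : (3 + 6 * Rabs q + a) * eta <= P / 4).
  { unfold eta. replace ((3 + 6 * Rabs q + a) * (P / (4 * (4 + 6 * Rabs q + a)))) with (P / 4 * ((3 + 6 * Rabs q + a) / (4 + 6 * Rabs q + a))) by (field; lra).
    assert ((3 + 6 * Rabs q + a) / (4 + 6 * Rabs q + a) <= 1).
    { apply (Rmult_le_reg_r (4 + 6 * Rabs q + a)). lra. unfold Rdiv. rewrite Rmult_assoc, Rinv_l by lra. lra. }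
    nra. }
  destruct (v_ev d r a b u0 v0 u v c1 ct1 t0 x0 Hs Hc31 Ht0 eta Heta) as [[dv [Hdv Hv]] _].
  destruct (lin_C1 phi phit phix t0 x0 HC1 Ht0 eta Heta) as [r1 [Hr1 [Hr1t Hlin]]].
  set (Lp := Rabs p + Rabs q + eta + 1).
  assert (HLp : 1 <= Lp) by (unfold Lp; pose proof (Rabs_pos p); lra).
  set (r0 := Rmin (Rmin rho r1) (Rmin dv (W / (4 * Lp)))).
  assert (Hr0 : 0 < r0) by (unfold r0; repeat apply Rmin_glb_lt; try lra; apply Rdiv_lt_0_compat; lra).
  assert (Hr0a : r0 <= rho) by (unfold r0; eapply Rle_trans; [apply Rmin_l|apply Rmin_l]).
  assert (Hr0b : r0 <= r1) by (unfold r0; eapply Rle_trans; [apply Rmin_l|apply Rmin_r]).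
  assert (Hr0c : r0 <= dv) by (unfold r0; eapply Rle_trans; [apply Rmin_r|apply Rmin_l]).
  assert (Hr0d : r0 <= W / (4 * Lp)) by (unfold r0; eapply Rle_trans; [apply Rmin_r|apply Rmin_r]).
  set (rr := r0 / 2). assert (Hrrdef : rr = r0 / 2) by reflexivity.
  assert (Hrr : 0 < rr) by (unfold rr; lra).
  assert (HrrW : rr * Lp <= W / 8).
  { apply Rle_trans with (W / (4 * Lp) / 2 * Lp). apply Rmult_le_compat_r; unfold rr; lra. right. field. lra. }
  set (Qb := box (t0 - rr) (t0 + rr) (x0 - rr) (x0 + rr)).
  assert (HQt : forall t x, Qb t x -> 0 < t /\ Rabs (t - t0) <= rr /\ Rabs (x - x0) <= rr).
  { intros t x [Ht Hx]. split. lra. split; unfold Rabs; destruct Rcase_abs; lra. }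
  set (h := fun t x => W + p * (t - t0) + q * (x - x0) + eta * (Rabs (t - t0) + Rabs (x - x0))).
  assert (Hwb : forall t x, Qb t x -> Rbar_le (wstar t x) (Finite (h t x))).
  { intros t x Hb. destruct (HQt t x Hb) as [Ht [Htt Hxx]].
    eapply Rbar_le_trans. apply Htouch; auto; lra. rewrite HW. simpl.
    specialize (Hlin t x ltac:(lra) ltac:(lra)). unfold h. fold p q in Hlin.
    revert Hlin. unfold Rabs at 1. destruct Rcase_abs; intros; lra. }
  set (Lh := Rabs p + Rabs q + eta).
  assert (HLh : 0 <= Lh) by (unfold Lh; pose proof (Rabs_pos p); lra).
  assert (Hhl : forall t x t' x', h t x <= h t' x' + Lh * (Rabs (t - t') + Rabs (x - x'))).
  { intros t x t' x'. unfold h, Lh; cbv beta.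
    pose proof (Rabs_triang_inv' (t - t0) (t' - t0)). pose proof (Rabs_triang_inv' (x - x0) (x' - x0)).
    replace (t - t0 - (t' - t0)) with (t - t') in H by ring. replace (x - x0 - (x' - x0)) with (x - x') in H1 by ring.
    assert (p * (t - t0) - p * (t' - t0) <= Rabs p * Rabs (t - t')).
    { rewrite <- Rabs_mult. replace (p * (t - t0) - p * (t' - t0)) with (p * (t - t')) by ring. apply Rle_abs. }
    assert (q * (x - x0) - q * (x' - x0) <= Rabs q * Rabs (x - x')).
    { rewrite <- Rabs_mult. replace (q * (x - x0) - q * (x' - x0)) with (q * (x - x')) by ring. apply Rle_abs. }
    assert (eta * (Rabs (t - t0) - Rabs (t' - t0)) <= eta * Rabs (t - t')) by (apply Rmult_le_compat_l; lra).
    assert (eta * (Rabs (x - x0) - Rabs (x' - x0)) <= eta * Rabs (x - x')) by (apply Rmult_le_compat_l; lra).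
    pose proof (Rabs_pos (t - t')). pose proof (Rabs_pos (x - x')). assert (0 <= Rabs p * Rabs (x - x')) by (apply Rmult_le_pos; apply Rabs_pos). assert (0 <= Rabs q * Rabs (t - t')) by (apply Rmult_le_pos; apply Rabs_pos). lra. }
  set (kap := eta * rr / 8). assert (Hkap : 0 < kap) by (unfold kap; nra).
  set (sg := rr / 48). assert (Hsg : 0 < sg) by (unfold sg; lra).
  destruct (unif_limsup (weps u) wstar h t0 x0 rr Lh kap Hrr ltac:(lra) HLh Hkap) as [dU [HdU HU]].
  { intros t x Hb. apply Hws. destruct (HQt t x Hb); lra. }
  { exact Hwb. } { exact Hhl. }
  set (del1 := Rmin (rr / 2) (eta * rr / (8 * (Rabs p + Rabs q + 6 * eta + 1)))).
  assert (Hdel1 : 0 < del1) by (unfold del1; apply Rmin_glb_lt; [lra| apply Rdiv_lt_0_compat; pose proof (Rabs_pos p); nra]).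
  assert (Hdel1a : del1 <= rr / 2) by apply Rmin_l.
  assert (Hdel1b : (Rabs p + Rabs q + 6 * eta) * del1 <= eta * rr / 8).
  { apply Rle_trans with ((Rabs p + Rabs q + 6 * eta + 1) * (eta * rr / (8 * (Rabs p + Rabs q + 6 * eta + 1)))).
    apply Rmult_le_compat. pose proof (Rabs_pos p); lra. lra. lra. apply Rmin_r.
    right. field. pose proof (Rabs_pos p); lra. }
  set (dUs := W / (2 * (Rabs (ln (P / 4)) + 1))).
  assert (HdUs : 0 < dUs) by (unfold dUs; apply Rdiv_lt_0_compat; pose proof (Rabs_pos (ln (P/4))); lra).
  set (d3 := P * sg / (12 * eta)).
  assert (Hd3 : 0 < d3) by (unfold d3; apply Rdiv_lt_0_compat; nra).
  set (de := Rmin (Rmin dU del1) (Rmin (Rmin dUs d3) dv)).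
  assert (Hde : 0 < de) by (unfold de; apply Rmin_glb_lt; [apply Rmin_glb_lt; [exact HdU| exact Hdel1]| apply Rmin_glb_lt; [apply Rmin_glb_lt; [exact HdUs|exact Hd3]| exact Hdv]]).
  assert (Hde1 : de <= dU) by (unfold de; eapply Rle_trans; [apply Rmin_l|apply Rmin_l]).
  assert (Hde2 : de <= del1) by (unfold de; eapply Rle_trans; [apply Rmin_l|apply Rmin_r]).
  assert (Hde3 : de <= dUs) by (unfold de; eapply Rle_trans; [apply Rmin_r|]; eapply Rle_trans; [apply Rmin_l|apply Rmin_l]).
  assert (Hde4 : de <= d3) by (unfold de; eapply Rle_trans; [apply Rmin_r|]; eapply Rle_trans; [apply Rmin_l|apply Rmin_r]).
  assert (Hde5 : de <= dv) by (unfold de; eapply Rle_trans; [apply Rmin_r|apply Rmin_r]).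
  destruct (proj2 (Hws t0 x0 ltac:(lra)) (W - kap) ltac:(rewrite HW; simpl; lra) de Hde) as [e [t1 [x1 [He [Ht1 [Htt1 [Hxx1 Hw1]]]]]]].
  assert (He' : 0 < e < dU) by lra.
  assert (Hfin : forall t x, Qb t x -> 0 < u (t / e) (x / e) /\ - e * ln (u (t / e) (x / e)) < h t x + kap).
  { intros t x Hb. specialize (HU e t x He' Hb). unfold weps, resc in HU.
    destruct Rlt_dec as [Hp|Hp]; simpl in HU; [split; auto| tauto]. }
  set (g := gfun p q (3 * eta) sg t0 x0).
  set (Psi := fun t x => u (t / e) (x / e) * exp (g t x / e)).
  assert (Hpc : cont_box (t0 - rr) (t0 + rr) (x0 - rr) (x0 + rr) (fun t x => - Psi t x)).
  { apply (cont_box_ext _ _ _ _ (fun t x => (fun _ _ => -1) t x * Psi t x)). intros; ring.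
    apply cont_box_mul. apply cont_box_const. unfold Psi. apply cont_box_mul.
    apply cont_box_resc. lra. lra. exact Hcu.
    apply (cont_box_comp _ _ _ _ exp (fun t x => g t x / e)). apply exp_cont.
    apply (cont_box_ext _ _ _ _ (fun t x => g t x * (fun _ _ => / e) t x)). intros; unfold Rdiv; ring.
    apply cont_box_mul. apply cont_box_g; auto. apply cont_box_const. }
  destruct (evt_box (t0 - rr) (t0 + rr) (x0 - rr) (x0 + rr) _ ltac:(lra) ltac:(lra) Hpc) as [ts [xs [Hbs Hmin]]].
  set (F := fun t x => - e * ln (u (t / e) (x / e)) - g t x).
  assert (HFmax : forall t x, Qb t x -> F t x <= F ts xs).
  { intros t x Hb. specialize (Hmin t x Hb). destruct (Hfin t x Hb) as [Hu1 _]. destruct (Hfin ts xs Hbs) as [Hu2 _].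
    unfold F. unfold Psi in Hmin.
    assert (Hl : ln (u (ts / e) (xs / e) * exp (g ts xs / e)) <= ln (u (t / e) (x / e) * exp (g t x / e))).
    { assert (0 < u (ts / e) (xs / e) * exp (g ts xs / e)) by (apply Rmult_lt_0_compat; [auto|apply exp_pos]).
      destruct (Req_dec (u (ts / e) (xs / e) * exp (g ts xs / e)) (u (t / e) (x / e) * exp (g t x / e))) as [Hq|Hq].
      rewrite Hq; lra. left. apply ln_increasing; auto. lra. }
    rewrite !ln_mult, !ln_exp in Hl by (auto; apply exp_pos).
    assert (Hl' : e * (ln (u (ts / e) (xs / e)) + g ts xs / e) <= e * (ln (u (t / e) (x / e)) + g t x / e)) by (apply Rmult_le_compat_l; lra).
    replace (e * (ln (u (ts / e) (xs / e)) + g ts xs / e)) with (e * ln (u (ts / e) (xs / e)) + g ts xs) in Hl' by (field; lra).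
    replace (e * (ln (u (t / e) (x / e)) + g t x / e)) with (e * ln (u (t / e) (x / e)) + g t x) in Hl' by (field; lra).
    lra. }
  assert (Hb1 : Qb t1 x1).
  { split; revert Htt1 Hxx1; unfold Rabs; repeat destruct Rcase_abs; intros; lra. }
  assert (HF1 : W - kap < F t1 x1 + g t1 x1).
  { destruct (Hfin t1 x1 Hb1) as [Hu1 _]. unfold weps, resc in Hw1. destruct Rlt_dec; [|tauto].
    simpl in Hw1. unfold F. lra. }
  assert (Hgup : forall t x, g t x <= Rabs p * Rabs (t - t0) + Rabs q * Rabs (x - x0) + 3 * eta * (Rabs (t - t0) + Rabs (x - x0) + 2 * sg)).
  { intros t x. unfold g, gfun. pose proof (S_le sg Hsg (t - t0)). pose proof (S_le sg Hsg (x - x0)).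
    assert (p * (t - t0) <= Rabs p * Rabs (t - t0)) by (rewrite <- Rabs_mult; apply Rle_abs).
    assert (q * (x - x0) <= Rabs q * Rabs (x - x0)) by (rewrite <- Rabs_mult; apply Rle_abs).
    assert (3 * eta * (S sg (t - t0) + S sg (x - x0)) <= 3 * eta * (Rabs (t - t0) + Rabs (x - x0) + 2 * sg)) by (apply Rmult_le_compat_l; lra).
    lra. }
  assert (Hglow : forall t x, - (Rabs p * Rabs (t - t0) + Rabs q * Rabs (x - x0)) + 3 * eta * (Rabs (t - t0) + Rabs (x - x0)) <= g t x).
  { intros t x. unfold g, gfun. pose proof (S_ge_abs sg Hsg (t - t0)). pose proof (S_ge_abs sg Hsg (x - x0)).
    assert (- (Rabs p * Rabs (t - t0)) <= p * (t - t0)) by (rewrite <- Rabs_mult; rewrite <- Rabs_Ropp; replace (- (p * (t - t0))) with (- p * (t - t0)) by ring; pose proof (Rle_abs (- p * (t - t0))); lra).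
    assert (- (Rabs q * Rabs (x - x0)) <= q * (x - x0)) by (rewrite <- Rabs_mult; rewrite <- Rabs_Ropp; replace (- (q * (x - x0))) with (- q * (x - x0)) by ring; pose proof (Rle_abs (- q * (x - x0))); lra).
    assert (3 * eta * (Rabs (t - t0) + Rabs (x - x0)) <= 3 * eta * (S sg (t - t0) + S sg (x - x0))) by (apply Rmult_le_compat_l; lra).
    lra. }
  assert (Hg1 : g t1 x1 <= eta * rr / 8 + eta * rr / 8).
  { eapply Rle_trans. apply Hgup.
    assert (Rabs (t1 - t0) <= del1) by lra. assert (Rabs (x1 - x0) <= del1) by lra.
    assert (Rabs p * Rabs (t1 - t0) <= Rabs p * del1) by (apply Rmult_le_compat_l; [apply Rabs_pos|lra]).
    assert (Rabs q * Rabs (x1 - x0) <= Rabs q * del1) by (apply Rmult_le_compat_l; [apply Rabs_pos|lra]).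
    assert (3 * eta * (Rabs (t1 - t0) + Rabs (x1 - x0)) <= 3 * eta * (2 * del1)) by (apply Rmult_le_compat_l; lra).
    assert (Hsgv : 3 * eta * (2 * sg) = eta * rr / 8) by (unfold sg; field).
    lra. }
  assert (Hann : forall t x, Qb t x -> (rr / 2 <= Rabs (t - t0) \/ rr / 2 <= Rabs (x - x0)) -> F t x < W + kap - eta * rr).
  { intros t x Hb Hor. destruct (Hfin t x Hb) as [_ Hf]. unfold F. unfold h in Hf.
    pose proof (S_ge_abs sg Hsg (t - t0)). pose proof (S_ge_abs sg Hsg (x - x0)).
    assert (3 * eta * (Rabs (t - t0) + Rabs (x - x0)) <= 3 * eta * (S sg (t - t0) + S sg (x - x0))) by (apply Rmult_le_compat_l; lra).
    assert (eta * rr <= 2 * eta * (Rabs (t - t0) + Rabs (x - x0))).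
    { pose proof (Rabs_pos (t - t0)). pose proof (Rabs_pos (x - x0)). destruct Hor; nra. }
    unfold g, gfun. lra. }
  assert (Hsint : Rabs (ts - t0) < rr / 2 /\ Rabs (xs - x0) < rr / 2).
  { assert (F t1 x1 <= F ts xs) by (apply HFmax; auto).
    destruct (Rlt_or_le (Rabs (ts - t0)) (rr / 2)); destruct (Rlt_or_le (Rabs (xs - x0)) (rr / 2)); auto;
    exfalso; (assert (Hx := Hann ts xs Hbs ltac:(tauto))); unfold kap in *; lra. }
  set (rho' := rr / 2 - Rmax (Rabs (ts - t0)) (Rabs (xs - x0))).
  assert (Hrho' : 0 < rho') by (unfold rho'; unfold Rmax; destruct Rle_dec; lra).
  assert (Hnb : forall t x, Rabs (t - ts) < rho' -> Rabs (x - xs) < rho' -> Qb t x).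
  { intros t x Ht Hx. pose proof (Rmax_l (Rabs (ts - t0)) (Rabs (xs - x0))). pose proof (Rmax_r (Rabs (ts - t0)) (Rabs (xs - x0))).
    unfold rho' in *. split; revert Ht Hx H H1; unfold Rabs; repeat destruct Rcase_abs; intros; lra. }
  assert (Hcore := core a e 1 u v ut ux uxx g (p + 3 * eta * ((ts - t0) / S sg (ts - t0)))
     (fun y => q + 3 * eta * ((y - x0) / S sg (y - x0))) (3 * eta * (sg * sg / (S sg (xs - x0) * S sg (xs - x0) * S sg (xs - x0))))
     ts xs rho' ltac:(ring) ltac:(lra) Hrho' Hder Heq').
  specialize (Hcore ltac:(intros t x Ht Hx; destruct (HQt t x (Hnb t x Ht Hx)); split; [lra|]; apply (Hfin t x (Hnb t x Ht Hx)))).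
  specialize (Hcore ltac:(intros t x Ht Hx; rewrite !Rmult_1_l; apply (HFmax t x (Hnb t x Ht Hx)))).
  specialize (Hcore (dl_g_t p q (3 * eta) sg t0 x0 xs ts Hsg) (fun y _ => dl_g_x p q (3 * eta) sg t0 x0 ts y Hsg) (dl_g_xx q (3 * eta) sg x0 xs Hsg)).
  rewrite Rmult_1_l in Hcore. cbv beta in Hcore.
  set (Us := u (ts / e) (xs / e)) in *. set (Vs := v (ts / e) (xs / e)) in *.
  assert (HVs : Vs < chi + eta).
  { assert (Hn : near dv t0 x0 e ts xs) by (unfold near; destruct (HQt ts xs Hbs); repeat split; lra).
    specialize (Hv e ts xs Hn). unfold resc in Hv. simpl in Hv. exact Hv. }
  assert (HUs : Us < P / 4).
  { destruct (Hfin ts xs Hbs) as [HUp _]. fold Us in HUp.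
    assert (HF : F t1 x1 <= F ts xs) by (apply HFmax; auto).
    assert (Hgs := Hglow ts xs).
    assert (Rabs p * Rabs (ts - t0) + Rabs q * Rabs (xs - x0) <= Lp * rr).
    { unfold Lp. pose proof (Rabs_pos p). pose proof (Rabs_pos q).
      assert (Rabs p * Rabs (ts - t0) <= Rabs p * rr) by (apply Rmult_le_compat_l; lra).
      assert (Rabs q * Rabs (xs - x0) <= Rabs q * rr) by (apply Rmult_le_compat_l; lra).
      assert (0 <= (eta + 1) * rr) by nra. nra. }
    assert (0 <= 3 * eta * (Rabs (ts - t0) + Rabs (xs - x0))) by (pose proof (Rabs_pos (ts - t0)); pose proof (Rabs_pos (xs - x0)); nra).
    assert (HwU : W / 2 < - e * ln Us).
    { assert (HFs : F ts xs = - e * ln Us - g ts xs) by reflexivity.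
      assert (eta * rr <= Lp * rr) by (unfold Lp; pose proof (Rabs_pos p); pose proof (Rabs_pos q); nra).
      assert (Hk : kap = eta * rr / 8) by reflexivity. lra. }
    assert (Hl : ln Us < ln (P / 4)).
    { assert (ln Us < - (W / 2) / e).
      { apply (Rmult_lt_reg_l e). lra. replace (e * (- (W / 2) / e)) with (- (W / 2)) by (field; lra). lra. }
      assert (- (W / 2) / e <= - Rabs (ln (P / 4)) - 1).
      { assert (W / 2 / e >= Rabs (ln (P / 4)) + 1).
        { apply Rle_ge. apply (Rmult_le_reg_r e). lra. replace (W / 2 / e * e) with (W / 2) by (field; lra).
          apply Rle_trans with ((Rabs (ln (P / 4)) + 1) * dUs). apply Rmult_le_compat_l. pose proof (Rabs_pos (ln (P/4))); lra. lra.
          unfold dUs. right. field. pose proof (Rabs_pos (ln (P/4))); lra. }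
        replace (- (W / 2) / e) with (- (W / 2 / e)) by (field; lra). lra. }
      pose proof (Rle_abs (- ln (P / 4))) as Hra. rewrite Rabs_Ropp in Hra. lra. }
    rewrite <- (exp_ln Us HUp), <- (exp_ln (P / 4)) by lra. apply exp_increasing. exact Hl. }
  destruct (ddS_bound sg Hsg (xs - x0)) as [Hdd1 Hdd2].
  assert (Hegxx : e * (3 * eta * (sg * sg / (S sg (xs - x0) * S sg (xs - x0) * S sg (xs - x0)))) < P / 4).
  { apply Rle_lt_trans with (e * (3 * eta * (1 / sg))). apply Rmult_le_compat_l. lra. apply Rmult_le_compat_l; lra.
    apply Rlt_le_trans with (d3 * (3 * eta * (1 / sg))). apply Rmult_lt_compat_r. apply Rmult_lt_0_compat. lra. apply Rdiv_lt_0_compat; lra. lra.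
    unfold d3. right. field. split; lra. }
  pose proof (dS_bound sg Hsg (ts - t0)) as Hb1'. pose proof (dS_bound sg Hsg (xs - x0)) as Hb2'.
  set (th1 := (ts - t0) / S sg (ts - t0)) in *. set (th2 := (xs - x0) / S sg (xs - x0)) in *.
  assert (Hth1 : -1 <= th1 <= 1) by (revert Hb1'; unfold Rabs; destruct Rcase_abs; lra).
  assert (Hth2 : -1 <= th2 <= 1) by (revert Hb2'; unfold Rabs; destruct Rcase_abs; lra).
  assert (Hgx2 : q * q - 6 * eta * Rabs q <= (q + 3 * eta * th2) * (q + 3 * eta * th2)).
  { assert (- (Rabs q) <= q <= Rabs q) by (unfold Rabs; destruct Rcase_abs; lra).
    assert (0 <= (3 * eta * th2) * (3 * eta * th2)) by nra.
    assert (- (6 * eta * Rabs q) <= 2 * q * (3 * eta * th2)).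
    { assert (Rabs (2 * q * (3 * eta * th2)) <= 6 * eta * Rabs q).
      { rewrite !Rabs_mult. rewrite (Rabs_pos_eq 2), (Rabs_pos_eq 3), (Rabs_pos_eq eta) by lra.
        assert (Rabs th2 <= 1) by (unfold Rabs; destruct Rcase_abs; lra). pose proof (Rabs_pos q). assert (0 <= eta * Rabs q * (1 - Rabs th2)) by (apply Rmult_le_pos; [apply Rmult_le_pos|]; lra). nra. }
      pose proof (Rle_abs (- (2 * q * (3 * eta * th2)))) as Hra. rewrite Rabs_Ropp in Hra. lra. }
    nra. }
  assert (Hgt1 : p - 3 * eta <= p + 3 * eta * th1) by nra.
  assert (HaV : a * Vs <= a * (chi + eta)) by (apply Rmult_le_compat_l; lra).
  assert (HPdef : P = p + (q * q + 1 - a * chi)) by reflexivity. lra.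
Qed.

Lemma super_main d r a b c1 ct1 u0 v0 u v (wlow : R -> R -> Rbar) phi phit phix t0 x0 W rho :
  0 < a < 1 -> is_solution_11 d r a b u0 v0 u v -> cond31 v c1 ct1 ->
  (forall t x, 0 <= t -> hr_liminf (weps u) t x (wlow t x)) ->
  C1_test phi phit phix -> 0 < t0 -> 0 < rho ->
  (forall t x, 0 < t -> Rabs (t - t0) < rho -> Rabs (x - x0) < rho ->
     Rbar_le (Rbar_addr (wlow t0 x0) (phi t x - phi t0 x0)) (wlow t x)) ->
  wlow t0 x0 = Finite W ->
  0 <= phit t0 x0 + (phix t0 x0 * phix t0 x0 + 1 - a * chi_between ct1 c1 t0 x0).
Proof.
  intros Ha Hs Hc31 Hwl HC1 Ht0 Hrho Htouch HW.
  pose proof Hs as Hs'.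
  destruct Hs' as [Hbd [H0 [ut [ux [uxx [vt [vx [vxx [[Hcu [_ [_ [_ Hder]]]] [_ Heq]]]]]]]]]].
  assert (Heq' : forall t x, 0 < t -> ut t x - uxx t x = u t x * (1 - u t x - a * v t x)) by (intros; apply Heq; auto).
  set (p := phit t0 x0). set (q := phix t0 x0). set (chi := chi_between ct1 c1 t0 x0).
  set (P := - (p + (q * q + 1 - a * chi))).
  destruct (Rle_or_lt P 0) as [HP|HP]. unfold P in HP. lra. exfalso.
  assert (Hq0 : 0 <= Rabs q) by apply Rabs_pos.
  set (eta := Rmin 1 (P / (4 * (13 + 6 * Rabs q + a)))).
  assert (Heta : 0 < eta) by (unfold eta; apply Rmin_glb_lt; [lra| apply Rdiv_lt_0_compat; lra]).
  assert (Heta1 : eta <= 1) by apply Rmin_l.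
  assert (Heta2 : (12 + 6 * Rabs q + a) * eta <= P / 4).
  { apply Rle_trans with ((12 + 6 * Rabs q + a) * (P / (4 * (13 + 6 * Rabs q + a)))).
    apply Rmult_le_compat_l. lra. apply Rmin_r.
    replace ((12 + 6 * Rabs q + a) * (P / (4 * (13 + 6 * Rabs q + a)))) with (P / 4 * ((12 + 6 * Rabs q + a) / (13 + 6 * Rabs q + a))) by (field; lra).
    assert ((12 + 6 * Rabs q + a) / (13 + 6 * Rabs q + a) <= 1).
    { apply (Rmult_le_reg_r (13 + 6 * Rabs q + a)). lra. unfold Rdiv. rewrite Rmult_assoc, Rinv_l by lra. lra. }
    nra. }
  destruct (v_ev d r a b u0 v0 u v c1 ct1 t0 x0 Hs Hc31 Ht0 eta Heta) as [_ [dv [Hdv Hv]]].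
  destruct (lin_C1 phi phit phix t0 x0 HC1 Ht0 eta Heta) as [r1 [Hr1 [Hr1t Hlin]]].
  set (Lp := Rabs p + Rabs q + eta + 1).
  assert (HLp : 1 <= Lp) by (unfold Lp; pose proof (Rabs_pos p); lra).
  set (r0 := Rmin (Rmin rho r1) dv).
  assert (Hr0 : 0 < r0) by (unfold r0; repeat apply Rmin_glb_lt; lra).
  assert (Hr0a : r0 <= rho) by (unfold r0; eapply Rle_trans; [apply Rmin_l|apply Rmin_l]).
  assert (Hr0b : r0 <= r1) by (unfold r0; eapply Rle_trans; [apply Rmin_l|apply Rmin_r]).
  assert (Hr0c : r0 <= dv) by (unfold r0; apply Rmin_r).
  set (rr := r0 / 2). assert (Hrrdef : rr = r0 / 2) by reflexivity.
  assert (Hrr : 0 < rr) by (unfold rr; lra).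
  set (Qb := box (t0 - rr) (t0 + rr) (x0 - rr) (x0 + rr)).
  assert (HQt : forall t x, Qb t x -> 0 < t /\ Rabs (t - t0) <= rr /\ Rabs (x - x0) <= rr).
  { intros t x [Ht Hx]. split. lra. split; unfold Rabs; destruct Rcase_abs; lra. }
  set (h := fun t x => W + p * (t - t0) + q * (x - x0) - eta * (Rabs (t - t0) + Rabs (x - x0))).
  assert (Hwb : forall t x, Qb t x -> Rbar_le (Finite (h t x)) (wlow t x)).
  { intros t x Hb. destruct (HQt t x Hb) as [Ht [Htt Hxx]].
    eapply Rbar_le_trans; [|apply Htouch; auto; lra]. rewrite HW. simpl.
    specialize (Hlin t x ltac:(lra) ltac:(lra)). unfold h. fold p q in Hlin.
    revert Hlin. unfold Rabs at 1. destruct Rcase_abs; intros; lra. }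
  set (Lh := Rabs p + Rabs q + eta).
  assert (HLh : 0 <= Lh) by (unfold Lh; pose proof (Rabs_pos p); lra).
  assert (Hhl : forall t x t' x', h t' x' - Lh * (Rabs (t - t') + Rabs (x - x')) <= h t x).
  { intros t x t' x'. unfold h, Lh; cbv beta.
    pose proof (Rabs_triang_inv' (t' - t0) (t - t0)). pose proof (Rabs_triang_inv' (x' - x0) (x - x0)).
    replace (t' - t0 - (t - t0)) with (- (t - t')) in H by ring. replace (x' - x0 - (x - x0)) with (- (x - x')) in H1 by ring.
    rewrite Rabs_Ropp in H, H1.
    assert (p * (t' - t0) - p * (t - t0) <= Rabs p * Rabs (t - t')).
    { rewrite <- Rabs_mult. replace (p * (t' - t0) - p * (t - t0)) with (- (p * (t - t'))) by ring. rewrite <- Rabs_Ropp. apply Rle_abs. }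
    assert (q * (x' - x0) - q * (x - x0) <= Rabs q * Rabs (x - x')).
    { rewrite <- Rabs_mult. replace (q * (x' - x0) - q * (x - x0)) with (- (q * (x - x'))) by ring. rewrite <- Rabs_Ropp. apply Rle_abs. }
    pose proof (Rabs_triang_inv' (t - t0) (t' - t0)) as Hi1. pose proof (Rabs_triang_inv' (x - x0) (x' - x0)) as Hi2.
    replace (t - t0 - (t' - t0)) with (t - t') in Hi1 by ring. replace (x - x0 - (x' - x0)) with (x - x') in Hi2 by ring.
    assert (eta * (Rabs (t - t0) - Rabs (t' - t0)) <= eta * Rabs (t - t')) by (apply Rmult_le_compat_l; lra).
    assert (eta * (Rabs (x - x0) - Rabs (x' - x0)) <= eta * Rabs (x - x')) by (apply Rmult_le_compat_l; lra).
    assert (0 <= Rabs p * Rabs (x - x')) by (apply Rmult_le_pos; apply Rabs_pos).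
    assert (0 <= Rabs q * Rabs (t - t')) by (apply Rmult_le_pos; apply Rabs_pos).
    lra. }
  set (kap := eta * rr / 8). assert (Hkap : 0 < kap) by (unfold kap; nra).
  set (sg := rr / 48). assert (Hsg : 0 < sg) by (unfold sg; lra).
  destruct (unif_liminf (weps u) wlow h t0 x0 rr Lh kap Hrr ltac:(lra) HLh Hkap) as [dU [HdU HU]].
  { intros t x Hb. apply Hwl. destruct (HQt t x Hb); lra. }
  { exact Hwb. } { exact Hhl. }
  set (del1 := Rmin (rr / 2) (eta * rr / (8 * (Rabs p + Rabs q + 6 * eta + 1)))).
  assert (Hdel1 : 0 < del1) by (unfold del1; apply Rmin_glb_lt; [lra| apply Rdiv_lt_0_compat; pose proof (Rabs_pos p); nra]).
  assert (Hdel1a : del1 <= rr / 2) by apply Rmin_l.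
  assert (Hdel1b : (Rabs p + Rabs q + 6 * eta) * del1 <= eta * rr / 8).
  { apply Rle_trans with ((Rabs p + Rabs q + 6 * eta + 1) * (eta * rr / (8 * (Rabs p + Rabs q + 6 * eta + 1)))).
    apply Rmult_le_compat. pose proof (Rabs_pos p); lra. lra. lra. apply Rmin_r.
    right. field. pose proof (Rabs_pos p); lra. }
  set (d3 := P * sg / (12 * eta)).
  assert (Hd3 : 0 < d3) by (unfold d3; apply Rdiv_lt_0_compat; nra).
  set (de := Rmin (Rmin dU del1) (Rmin d3 dv)).
  assert (Hde : 0 < de) by (unfold de; apply Rmin_glb_lt; [apply Rmin_glb_lt; [exact HdU| exact Hdel1]| apply Rmin_glb_lt; [exact Hd3| exact Hdv]]).
  assert (Hde1 : de <= dU) by (unfold de; eapply Rle_trans; [apply Rmin_l|apply Rmin_l]).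
  assert (Hde2 : de <= del1) by (unfold de; eapply Rle_trans; [apply Rmin_l|apply Rmin_r]).
  assert (Hde4 : de <= d3) by (unfold de; eapply Rle_trans; [apply Rmin_r|apply Rmin_l]).
  assert (Hde5 : de <= dv) by (unfold de; eapply Rle_trans; [apply Rmin_r|apply Rmin_r]).
  destruct (proj2 (Hwl t0 x0 ltac:(lra)) (W + kap) ltac:(rewrite HW; simpl; lra) de Hde) as [e [t1 [x1 [He [Ht1 [Htt1 [Hxx1 Hw1]]]]]]].
  assert (He' : 0 < e < dU) by lra.
  assert (Hfin : forall t x, Qb t x -> 0 < u (t / e) (x / e) -> h t x - kap < - e * ln (u (t / e) (x / e))).
  { intros t x Hb Hp. specialize (HU e t x He' Hb). unfold weps, resc in HU.
    destruct Rlt_dec as [Hp'|Hp']; simpl in HU; [auto| tauto]. }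
  set (g := gfun p q (- 3 * eta) sg t0 x0).
  set (Psi := fun t x => u (t / e) (x / e) * exp (g t x / e)).
  assert (HUc : cont_box (t0 - rr) (t0 + rr) (x0 - rr) (x0 + rr) (fun t x => u (t / e) (x / e))).
  { apply cont_box_resc. lra. lra. exact Hcu. }
  assert (Hpc : cont_box (t0 - rr) (t0 + rr) (x0 - rr) (x0 + rr) Psi).
  { unfold Psi. apply cont_box_mul. exact HUc.
    apply (cont_box_comp _ _ _ _ exp (fun t x => g t x / e)). apply exp_cont.
    apply (cont_box_ext _ _ _ _ (fun t x => g t x * (fun _ _ => / e) t x)). intros; unfold Rdiv; ring.
    apply cont_box_mul. apply cont_box_g; auto. apply cont_box_const. }
  destruct (evt_box (t0 - rr) (t0 + rr) (x0 - rr) (x0 + rr) _ ltac:(lra) ltac:(lra) Hpc) as [ts [xs [Hbs Hmax]]].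
  assert (Hb1 : Qb t1 x1).
  { split; revert Htt1 Hxx1; unfold Rabs; repeat destruct Rcase_abs; intros; lra. }
  assert (HU1 : 0 < u (t1 / e) (x1 / e) /\ - e * ln (u (t1 / e) (x1 / e)) < W + kap).
  { unfold weps, resc in Hw1. destruct Rlt_dec; [|simpl in Hw1; tauto]. simpl in Hw1. split; auto. }
  assert (HPs : Psi t1 x1 <= Psi ts xs) by (apply Hmax; auto).
  assert (HUs : 0 < u (ts / e) (xs / e)).
  { assert (0 < Psi t1 x1) by (unfold Psi; apply Rmult_lt_0_compat; [tauto|apply exp_pos]).
    unfold Psi in *. destruct (Rle_or_lt (u (ts / e) (xs / e)) 0) as [Hn|]; auto.
    pose proof (exp_pos (g ts xs / e)). assert (u (ts / e) (xs / e) * exp (g ts xs / e) <= 0) by nra. lra. }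
  set (F := fun t x => - e * ln (u (t / e) (x / e)) - g t x).
  assert (HFmin : forall t x, Qb t x -> 0 < u (t / e) (x / e) -> F ts xs <= F t x).
  { intros t x Hb Hu1. specialize (Hmax t x Hb).
    unfold F. unfold Psi in Hmax.
    assert (Hl : ln (u (t / e) (x / e) * exp (g t x / e)) <= ln (u (ts / e) (xs / e) * exp (g ts xs / e))).
    { assert (0 < u (t / e) (x / e) * exp (g t x / e)) by (apply Rmult_lt_0_compat; [auto|apply exp_pos]).
      destruct (Req_dec (u (t / e) (x / e) * exp (g t x / e)) (u (ts / e) (xs / e) * exp (g ts xs / e))) as [Hq|Hq].
      rewrite Hq; lra. left. apply ln_increasing; auto. lra. }
    rewrite !ln_mult, !ln_exp in Hl by (auto; apply exp_pos).
    assert (Hl' : e * (ln (u (t / e) (x / e)) + g t x / e) <= e * (ln (u (ts / e) (xs / e)) + g ts xs / e)) by (apply Rmult_le_compat_l; lra).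
    replace (e * (ln (u (ts / e) (xs / e)) + g ts xs / e)) with (e * ln (u (ts / e) (xs / e)) + g ts xs) in Hl' by (field; lra).
    replace (e * (ln (u (t / e) (x / e)) + g t x / e)) with (e * ln (u (t / e) (x / e)) + g t x) in Hl' by (field; lra).
    lra. }
  assert (Hgup : forall t x, - g t x <= Rabs p * Rabs (t - t0) + Rabs q * Rabs (x - x0) + 3 * eta * (Rabs (t - t0) + Rabs (x - x0) + 2 * sg)).
  { intros t x. unfold g, gfun. pose proof (S_le sg Hsg (t - t0)). pose proof (S_le sg Hsg (x - x0)).
    assert (- (p * (t - t0)) <= Rabs p * Rabs (t - t0)) by (rewrite <- Rabs_mult, <- Rabs_Ropp; apply Rle_abs).
    assert (- (q * (x - x0)) <= Rabs q * Rabs (x - x0)) by (rewrite <- Rabs_mult, <- Rabs_Ropp; apply Rle_abs).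
    assert (3 * eta * (S sg (t - t0) + S sg (x - x0)) <= 3 * eta * (Rabs (t - t0) + Rabs (x - x0) + 2 * sg)) by (apply Rmult_le_compat_l; lra).
    lra. }
  assert (Hglow : forall t x, g t x <= Rabs p * Rabs (t - t0) + Rabs q * Rabs (x - x0) - 3 * eta * (Rabs (t - t0) + Rabs (x - x0))).
  { intros t x. unfold g, gfun. pose proof (S_ge_abs sg Hsg (t - t0)). pose proof (S_ge_abs sg Hsg (x - x0)).
    assert (p * (t - t0) <= Rabs p * Rabs (t - t0)) by (rewrite <- Rabs_mult; apply Rle_abs).
    assert (q * (x - x0) <= Rabs q * Rabs (x - x0)) by (rewrite <- Rabs_mult; apply Rle_abs).
    assert (3 * eta * (Rabs (t - t0) + Rabs (x - x0)) <= 3 * eta * (S sg (t - t0) + S sg (x - x0))) by (apply Rmult_le_compat_l; lra).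
    lra. }
  assert (Hg1 : - g t1 x1 <= eta * rr / 8 + eta * rr / 8).
  { eapply Rle_trans. apply Hgup.
    assert (Rabs (t1 - t0) <= del1) by lra. assert (Rabs (x1 - x0) <= del1) by lra.
    assert (Rabs p * Rabs (t1 - t0) <= Rabs p * del1) by (apply Rmult_le_compat_l; [apply Rabs_pos|lra]).
    assert (Rabs q * Rabs (x1 - x0) <= Rabs q * del1) by (apply Rmult_le_compat_l; [apply Rabs_pos|lra]).
    assert (3 * eta * (Rabs (t1 - t0) + Rabs (x1 - x0)) <= 3 * eta * (2 * del1)) by (apply Rmult_le_compat_l; lra).
    assert (Hsgv : 3 * eta * (2 * sg) = eta * rr / 8) by (unfold sg; field).
    lra. }
  assert (Hann : forall t x, Qb t x -> 0 < u (t / e) (x / e) -> (rr / 2 <= Rabs (t - t0) \/ rr / 2 <= Rabs (x - x0)) -> W - kap + eta * rr < F t x).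
  { intros t x Hb Hu1 Hor. specialize (Hfin t x Hb Hu1). unfold F. unfold h in Hfin.
    pose proof (S_ge_abs sg Hsg (t - t0)). pose proof (S_ge_abs sg Hsg (x - x0)).
    assert (3 * eta * (Rabs (t - t0) + Rabs (x - x0)) <= 3 * eta * (S sg (t - t0) + S sg (x - x0))) by (apply Rmult_le_compat_l; lra).
    assert (eta * rr <= 2 * eta * (Rabs (t - t0) + Rabs (x - x0))).
    { pose proof (Rabs_pos (t - t0)). pose proof (Rabs_pos (x - x0)). destruct Hor; nra. }
    unfold g, gfun. lra. }
  assert (HF1 : F t1 x1 < W + kap + eta * rr / 4).
  { unfold F. destruct HU1. lra. }
  assert (HFs1 : F ts xs <= F t1 x1) by (apply HFmin; tauto).
  assert (Hsint : Rabs (ts - t0) < rr / 2 /\ Rabs (xs - x0) < rr / 2).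
  { destruct (Rlt_or_le (Rabs (ts - t0)) (rr / 2)); destruct (Rlt_or_le (Rabs (xs - x0)) (rr / 2)); auto;
    exfalso; (assert (Hx := Hann ts xs Hbs HUs ltac:(tauto))); unfold kap in *; lra. }
  destruct (HUc ts xs Hbs (u (ts / e) (xs / e) / 2) ltac:(lra)) as [dc [Hdc Hdc2]].
  set (rho' := Rmin (rr / 2 - Rmax (Rabs (ts - t0)) (Rabs (xs - x0))) dc).
  assert (Hrho' : 0 < rho') by (unfold rho'; apply Rmin_glb_lt; [unfold Rmax; destruct Rle_dec; lra| lra]).
  assert (Hrho'1 : rho' <= rr / 2 - Rmax (Rabs (ts - t0)) (Rabs (xs - x0))) by apply Rmin_l.
  assert (Hrho'2 : rho' <= dc) by apply Rmin_r.
  assert (Hnb : forall t x, Rabs (t - ts) < rho' -> Rabs (x - xs) < rho' -> Qb t x).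
  { intros t x Ht Hx. pose proof (Rmax_l (Rabs (ts - t0)) (Rabs (xs - x0))). pose proof (Rmax_r (Rabs (ts - t0)) (Rabs (xs - x0))).
    split; revert Ht Hx H H1 Hrho'1; unfold Rabs; repeat destruct Rcase_abs; intros; lra. }
  assert (Hnbu : forall t x, Rabs (t - ts) < rho' -> Rabs (x - xs) < rho' -> 0 < u (t / e) (x / e)).
  { intros t x Ht Hx. specialize (Hdc2 t x (Hnb t x Ht Hx) ltac:(lra) ltac:(lra)).
    revert Hdc2. unfold Rabs. destruct Rcase_abs; intros; lra. }
  assert (Hcore := core a e (-1) u v ut ux uxx g (p + (- 3 * eta) * ((ts - t0) / S sg (ts - t0)))
     (fun y => q + (- 3 * eta) * ((y - x0) / S sg (y - x0))) ((- 3 * eta) * (sg * sg / (S sg (xs - x0) * S sg (xs - x0) * S sg (xs - x0))))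
     ts xs rho' ltac:(ring) ltac:(lra) Hrho' Hder Heq').
  specialize (Hcore ltac:(intros t x Ht Hx; destruct (HQt t x (Hnb t x Ht Hx)); split; [lra|]; apply (Hnbu t x Ht Hx))).
  specialize (Hcore ltac:(intros t x Ht Hx; assert (HH := HFmin t x (Hnb t x Ht Hx) (Hnbu t x Ht Hx)); unfold F in HH; lra)).
  specialize (Hcore (dl_g_t p q (- 3 * eta) sg t0 x0 xs ts Hsg) (fun y _ => dl_g_x p q (- 3 * eta) sg t0 x0 ts y Hsg) (dl_g_xx q (- 3 * eta) sg x0 xs Hsg)).
  cbv beta in Hcore.
  set (Us := u (ts / e) (xs / e)) in *. set (Vs := v (ts / e) (xs / e)) in *.
  assert (HVs : chi - eta < Vs).
  { assert (Hn : near dv t0 x0 e ts xs) by (unfold near; destruct (HQt ts xs Hbs); repeat split; lra).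
    specialize (Hv e ts xs Hn). unfold resc in Hv. simpl in Hv. exact Hv. }
  destruct (ddS_bound sg Hsg (xs - x0)) as [Hdd1 Hdd2].
  assert (Hegxx : e * (3 * eta * (sg * sg / (S sg (xs - x0) * S sg (xs - x0) * S sg (xs - x0)))) < P / 4).
  { apply Rle_lt_trans with (e * (3 * eta * (1 / sg))). apply Rmult_le_compat_l. lra. apply Rmult_le_compat_l; lra.
    apply Rlt_le_trans with (d3 * (3 * eta * (1 / sg))). apply Rmult_lt_compat_r. apply Rmult_lt_0_compat. lra. apply Rdiv_lt_0_compat; lra. lra.
    unfold d3. right. field. split; lra. }
  pose proof (dS_bound sg Hsg (ts - t0)) as Hb1'. pose proof (dS_bound sg Hsg (xs - x0)) as Hb2'.
  set (th1 := (ts - t0) / S sg (ts - t0)) in *. set (th2 := (xs - x0) / S sg (xs - x0)) in *.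
  set (D2 := sg * sg / (S sg (xs - x0) * S sg (xs - x0) * S sg (xs - x0))) in *.
  assert (Hth1 : -1 <= th1 <= 1) by (revert Hb1'; unfold Rabs; destruct Rcase_abs; lra).
  assert (Hth2 : -1 <= th2 <= 1) by (revert Hb2'; unfold Rabs; destruct Rcase_abs; lra).
  assert (Hgx2 : (q + - 3 * eta * th2) * (q + - 3 * eta * th2) <= q * q + 6 * eta * Rabs q + 9 * eta).
  { assert (Hm : Rabs (2 * q * (- 3 * eta * th2)) <= 6 * eta * Rabs q).
    { rewrite !Rabs_mult. rewrite (Rabs_pos_eq 2) by lra. rewrite (Rabs_left (-3)), (Rabs_pos_eq eta) by lra.
      assert (Rabs th2 <= 1) by (unfold Rabs; destruct Rcase_abs; lra). pose proof (Rabs_pos q).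
      assert (0 <= eta * Rabs q * (1 - Rabs th2)) by (apply Rmult_le_pos; [apply Rmult_le_pos|]; lra). nra. }
    pose proof (Rle_abs (2 * q * (- 3 * eta * th2))) as Hra.
    assert ((- 3 * eta * th2) * (- 3 * eta * th2) <= 9 * eta).
    { assert (th2 * th2 <= 1) by nra. assert (eta * eta <= eta) by nra. nra. }
    nra. }
  assert (Hgt1 : p + - 3 * eta * th1 <= p + 3 * eta) by nra.
  assert (HaV : a * (chi - eta) <= a * Vs) by (apply Rmult_le_compat_l; lra).
  assert (HPdef : P = - (p + (q * q + 1 - a * chi))) by reflexivity.
  assert (Hge : e * (- 3 * eta * D2) = - (e * (3 * eta * D2))) by ring.
  lra.
Qed.

Lemma fin_nonneg L Mb : Rbar_le L (Finite Mb) -> (forall k, 0 < k -> Rbar_le (Finite (-k)) L) ->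
  exists W, L = Finite W /\ 0 <= W.
Proof.
  intros H1 H2. destruct L as [w| |]; simpl in *; try tauto.
  - exists w. split; auto. destruct (Rle_or_lt 0 w); auto. specialize (H2 (-w/2) ltac:(lra)). simpl in H2. lra.
  - specialize (H2 1 ltac:(lra)). simpl in H2. tauto.
Qed.

Theorem lemma3p4 (d r a b c1 ct1 : R) (u0 v0 : R -> R) (u v : R -> R -> R)
    (wstar wlow : R -> R -> Rbar) :
  0 < d -> 0 < r -> 0 < a < 1 -> 0 < b < 1 ->
  H_inf u0 v0 ->
  is_solution_11 d r a b u0 v0 u v ->
  2 <= ct1 -> ct1 < c1 ->
  cond31 v c1 ct1 ->
  (forall t x, 0 <= t -> hr_limsup (weps u) t x (wstar t x)) ->
  (forall t x, 0 <= t -> hr_liminf (weps u) t x (wlow t x)) ->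
  (usc_on_closed_half wstar /\ visc_subsol (H1 a c1) wstar) /\
  (lsc_on_closed_half wlow /\ visc_supersol (H2 a c1 ct1) wlow) /\
  (forall x, x < 0 -> wstar 0 x = Finite 0 /\ wlow 0 x = Finite 0) /\
  (forall x, 0 < x -> wlow 0 x = p_infty).
Proof.
  intros Hd Hr Ha Hb Hi Hs Hct1 Hc1 Hc31 Hws Hwl.
  destruct (init_values d r a b u0 v0 u v wstar wlow Ha Hi Hs Hws Hwl) as [Hin1 Hin2].
  refine (conj (conj _ _) (conj (conj _ _) (conj Hin1 Hin2))).
  - exact (usc_of_limsup _ _ Hws).
  - intros phi phit phix t0 x0 HC1 Ht0 [rho [Hrho Htouch]].
    destruct (ev_w_bounded d r a b u0 v0 u v Ha Hi Hs t0 x0 Ht0) as [Mb HMb].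
    destruct (fin_nonneg (wstar t0 x0) Mb) as [W [HW HW0]].
    { apply (limsup_le (weps u) t0 x0). lra. apply Hws; lra. exact HMb. }
    { intros k Hk. apply (limsup_ge (weps u) t0 x0). lra. apply Hws; lra. exact (ev_w_lower d r a b u0 v0 u v Ha Hs t0 x0 k Hk). }
    destruct (Rle_or_lt W 0) as [HW1|HW1].
    + right. rewrite HW. simpl. exact HW1.
    + left. assert (Hm := sub_main d r a b c1 ct1 u0 v0 u v wstar phi phit phix t0 x0 W rho Ha Hs Hc31 Hws HC1 Ht0 Hrho Htouch HW HW1).
      unfold H1. simpl. lra.
  - exact (lsc_of_liminf _ _ Hwl).
  - intros phi phit phix t0 x0 HC1 Ht0 [rho [Hrho Htouch]].
    destruct (ev_w_bounded d r a b u0 v0 u v Ha Hi Hs t0 x0 Ht0) as [Mb HMb].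
    destruct (fin_nonneg (wlow t0 x0) Mb) as [W [HW HW0]].
    { apply (liminf_le (weps u) t0 x0). lra. apply Hwl; lra. exact HMb. }
    { intros k Hk. apply (liminf_ge (weps u) t0 x0). lra. apply Hwl; lra. exact (ev_w_lower d r a b u0 v0 u v Ha Hs t0 x0 k Hk). }
    split.
    + assert (Hm := super_main d r a b c1 ct1 u0 v0 u v wlow phi phit phix t0 x0 W rho Ha Hs Hc31 Hwl HC1 Ht0 Hrho Htouch HW).
      unfold H2. simpl. lra.
    + rewrite HW. simpl. exact HW0.
Qed.
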